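(* Let $\varphi$ be a Schwartz function on $\mathbb{R}$ such that $d=\operatorname{dist}(\operatorname{supp}\hat\varphi,0)>0$, and let $p$ be a polynomial of degree $n$. Then there is a constant $C>0$ (depending on $\varphi$ and $p$) such that \[ |p(x)(\varphi\ast P_y)(x)|\le C(1+y^n)\frac{e^{-2\pi dy}}{y^{1/2}},\qquad x\in\mathbb{R},\ y>0. \]
   Context: $P_y(t)=\frac{1}{\pi}\frac{y}{t^2+y^2}$ is the Poisson kernel of the upper half plane, and $\hat\varphi(\xi)=\int\varphi(x)e^{-2\pi ix\xi}dx$. *)

(* Defs.v *)
From Stdlib Require Import Reals.
From Coquelicot Require Import Coquelicot.
Open Scope R_scope.

Definition cexpi (t : R) : C := (cos t, sin t).

Definition is_schwartz (f : R -> C) : Prop :=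
  exists D : nat -> R -> C,
    D 0%nat = f /\
    (forall (k : nat) (x : R), is_derive (V := C_R_NormedModule) (D k) x (D (S k) x)) /\
    (forall k m : nat, exists M : R, forall x : R, Rabs (x ^ m) * Cmod (D k x) <= M).

Definition int_R (f : R -> C) : C :=
  RInt_gen (V := C_R_CompleteNormedModule) f (Rbar_locally m_infty) (Rbar_locally p_infty).

Definition fourier (f : R -> C) (xi : R) : C :=
  int_R (fun x => Cmult (f x) (cexpi (- (2 * PI * x * xi)))).

Definition support (g : R -> C) (xi : R) : Prop :=
  forall e : R, 0 < e -> exists eta : R, Rabs (eta - xi) < e /\ g eta <> 0%C.

Definition dist_to_0 (S : R -> Prop) (d : R) : Prop :=
  (forall xi, S xi -> d <= Rabs xi) /\
  (forall e : R, 0 < e -> exists xi, S xi /\ Rabs xi < d + e).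

Definition poisson (y t : R) : R := / PI * (y / (t ^ 2 + y ^ 2)).

Definition conv_poisson (f : R -> C) (y x : R) : C :=
  int_R (fun t => Cmult (f (x - t)) (RtoC (poisson y t))).

Definition poly_eval (a : nat -> C) (n : nat) (x : R) : C :=
  sum_n (fun k => Cmult (a k) (RtoC (x ^ k))) n.

(* Main.v *)
Require Import Defs.
From Stdlib Require Import Reals.
From Coquelicot Require Import Coquelicot.
Open Scope R_scope.
From Stdlib Require Import Lra Psatz FunctionalExtensionality.
Set Bullet Behavior "Strict Subproofs".

Lemma cont_C_intro (f : R -> C) (x : R) :
  continuous (fun s => Re (f s)) x -> continuous (fun s => Im (f s)) x ->
  continuous (U := C_R_NormedModule) f x.
Proof.
  intros H1 H2.
  apply filterlim_locally. intros eps.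
  apply (proj1 (filterlim_locally _ _)) with (eps := eps) in H1.
  apply (proj1 (filterlim_locally _ _)) with (eps := eps) in H2.
  generalize (filter_and _ _ H1 H2).
  apply filter_imp. intros s [Ha Hb].
  destruct (f s) as [p q] eqn:E1. destruct (f x) as [p0 q0] eqn:E2.
  simpl in *. split; assumption.
Qed.

Lemma cont_C_Re (f : R -> C) (x : R) :
  continuous (U := C_R_NormedModule) f x -> continuous (fun s => Re (f s)) x.
Proof.
  intros H. apply filterlim_locally. intros eps.
  apply (proj1 (filterlim_locally _ _)) with (eps := eps) in H.
  revert H. apply filter_imp. intros s [Ha Hb]. exact Ha.
Qed.

Lemma cont_C_Im (f : R -> C) (x : R) :
  continuous (U := C_R_NormedModule) f x -> continuous (fun s => Im (f s)) x.
Proof.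
  intros H. apply filterlim_locally. intros eps.
  apply (proj1 (filterlim_locally _ _)) with (eps := eps) in H.
  revert H. apply filter_imp. intros s [Ha Hb]. exact Hb.
Qed.

Lemma cont_Cmult (f g : R -> C) (x : R) :
  continuous (U := C_R_NormedModule) f x -> continuous (U := C_R_NormedModule) g x ->
  continuous (U := C_R_NormedModule) (fun s => Cmult (f s) (g s)) x.
Proof.
  intros Hf Hg. apply cont_C_intro; simpl.
  - apply (continuous_minus (V:=R_NormedModule));
    apply (continuous_mult (K:=R_AbsRing)); first [apply cont_C_Re | apply cont_C_Im]; auto.
  - apply (continuous_plus (V:=R_NormedModule));
    apply (continuous_mult (K:=R_AbsRing)); first [apply cont_C_Re | apply cont_C_Im]; auto.
Qed.

Lemma cont_of_ex (f : R -> R) x : ex_derive f x -> continuous f x.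
Proof. intros H. now apply (ex_derive_continuous (K:=R_AbsRing) (V:=R_NormedModule)). Qed.

Notation CV := C_R_CompleteNormedModule.
Definition ccont (f : R -> C) := forall s, continuous (U := C_R_NormedModule) f s.

Lemma ex_RInt_C (f : R -> C) a b : ccont f -> ex_RInt (V:=CV) f a b.
Proof. intros H. apply ex_RInt_continuous. intros z _. apply H. Qed.

Lemma Cmod_minus_RInt (f : R -> C) a b : norm (V:=CV) (RInt (V:=CV) f a b) = Cmod (RInt (V:=CV) f a b).
Proof. now rewrite Cmod_norm. Qed.

Lemma approx_is_RInt_gen (g : R -> C) (L : C) :
  (forall a b, ex_RInt (V:=CV) g a b) ->
  (forall eps, 0 < eps -> exists N, forall a b, a < - N -> N < b ->
      Cmod (RInt (V:=CV) g a b - L) < eps) ->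
  is_RInt_gen (V:=CV) g (Rbar_locally m_infty) (Rbar_locally p_infty) L.
Proof.
  intros Hex Hap P [eps HP].
  destruct (Hap eps (cond_pos eps)) as [N HN].
  exists (fun a => a < - N) (fun b => N < b).
  - exists (-N). auto.
  - exists N. auto.
  - intros a b Ha Hb. exists (RInt (V:=CV) g a b). split.
    + apply RInt_correct. apply Hex.
    + apply HP. apply norm_compat1. rewrite <- Cmod_norm.
      replace (minus (RInt (V:=CV) g a b) L) with (RInt (V:=CV) g a b - L)%C by reflexivity.
      apply HN; auto.
Qed.

Lemma int_R_approx (g : R -> C) :
  (forall a b, ex_RInt (V:=CV) g a b) ->
  ex_RInt_gen (V:=CV) g (Rbar_locally m_infty) (Rbar_locally p_infty) ->
  forall eps, 0 < eps -> exists N, forall a b, a < - N -> N < b ->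
      Cmod (RInt (V:=CV) g a b - int_R g) < eps.
Proof.
  intros Hex He eps Heps.
  assert (H := RInt_gen_correct (V:=CV) g He).
  assert (Hnf : 0 < norm_factor (V:=CV)) by apply norm_factor_gt_0.
  assert (Hp : 0 < eps / norm_factor (V:=CV)) by (apply Rdiv_lt_0_compat; auto).
  destruct (H (ball (int_R g) (mkposreal _ Hp))) as [Q R0 HQ HR HQR].
  { apply locally_ball. }
  destruct HQ as [M1 HM1]. destruct HR as [M2 HM2].
  exists (Rmax (Rabs M1) (Rabs M2)). intros a b Ha Hb.
  destruct (HQR a b) as [y [Hy Hb']].
  { apply HM1. assert (Rabs M1 <= Rmax (Rabs M1) (Rabs M2)) by apply Rmax_l.
    assert (- Rabs M1 <= M1) by (generalize (Rabs_Ropp M1) (RRle_abs (- M1)); lra). lra. }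
  { apply HM2. assert (Rabs M2 <= Rmax (Rabs M1) (Rabs M2)) by apply Rmax_r.
    assert (M2 <= Rabs M2) by apply RRle_abs. lra. }
  simpl in Hy. rewrite (is_RInt_unique _ _ _ _ Hy).
  apply (norm_compat2 (V:=CV)) in Hb'. simpl in Hb'.
  rewrite Cmod_norm. replace (eps) with (norm_factor (V:=CV) * (eps / norm_factor (V:=CV))).
  exact Hb'. field. lra.
Qed.

Lemma int_R_eq_approx (g : R -> C) (L : C) :
  (forall a b, ex_RInt (V:=CV) g a b) ->
  (forall eps, 0 < eps -> exists N, forall a b, a < - N -> N < b ->
      Cmod (RInt (V:=CV) g a b - L) < eps) ->
  int_R g = L.
Proof.
  intros H1 H2. unfold int_R. apply (is_RInt_gen_unique (V:=CV)). apply approx_is_RInt_gen; auto.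
Qed.

Lemma CV_plus (x y : CV) : plus x y = Cplus x y.
Proof. reflexivity. Qed.
Lemma CV_minus (x y : CV) : minus x y = Cminus x y.
Proof. reflexivity. Qed.
Lemma CV_opp (x : CV) : opp x = Copp x.
Proof. reflexivity. Qed.
Lemma CV_scal (r : R) (x : CV) : scal r x = Cmult (RtoC r) x.
Proof. unfold scal; simpl. unfold prod_scal, Cmult, RtoC; simpl. destruct x as [p q]. simpl.
  change (scal r p) with (r * p). change (scal r q) with (r * q). f_equal; ring. Qed.

Ltac simplC := repeat match goal with
  | |- context [@plus ?G ?x ?y] => change (@plus G x y) with (Cplus x y)
  | |- context [@minus ?G ?x ?y] => change (@minus G x y) with (Cminus x y)
  | |- context [@opp ?G ?x] => change (@opp G x) with (Copp x)
  end.

Definition dom (f : R -> C) (M : R) := forall s, Cmod (f s) * (1 + s^2) <= M.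

Lemma dom_pt (f : R -> C) M s : dom f M -> Cmod (f s) <= M / (1 + s^2).
Proof.
  intros H. specialize (H s). assert (0 < 1 + s^2) by nra.
  apply Rmult_le_reg_r with (1 + s^2); auto. field_simplify; lra.
Qed.

Lemma dom_M_ge0 f M : dom f M -> 0 <= M.
Proof. intros H. specialize (H 0). generalize (Cmod_ge_0 (f 0)). nra. Qed.

Lemma is_RInt_invsq (M p q : R) : 0 < p -> p <= q ->
  is_RInt (fun s => M / s^2) p q (M / p - M / q).
Proof.
  intros Hp Hpq.
  replace (M / p - M / q) with (minus ((fun s => - M / s) q) ((fun s => - M / s) p))
    by (unfold minus, plus, opp; simpl; field; repeat split; lra).
  apply (is_RInt_derive (V:=R_CompleteNormedModule)).
  - intros x Hx. rewrite Rmin_left in Hx by lra. rewrite Rmax_right in Hx by lra.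
    auto_derive. lra. field. lra.
  - intros x Hx. rewrite Rmin_left in Hx by lra. rewrite Rmax_right in Hx by lra.
    apply cont_of_ex. auto_derive. intro; nra.
Qed.

Lemma is_RInt_invsq_neg (M p q : R) : q <= p -> p < 0 ->
  is_RInt (fun s => M / s^2) q p (M / q - M / p).
Proof.
  intros Hp Hpq.
  replace (M / q - M / p) with (minus ((fun s => - M / s) p) ((fun s => - M / s) q))
    by (unfold minus, plus, opp; simpl; field; repeat split; lra).
  apply (is_RInt_derive (V:=R_CompleteNormedModule)).
  - intros x Hx. rewrite Rmin_left in Hx by lra. rewrite Rmax_right in Hx by lra.
    auto_derive. lra. field. lra.
  - intros x Hx. rewrite Rmin_left in Hx by lra. rewrite Rmax_right in Hx by lra.
    apply cont_of_ex. auto_derive. intro; nra.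
Qed.

Lemma tail_pos (f : R -> C) M p q : ccont f -> dom f M -> 1 <= p -> p <= q ->
  Cmod (RInt (V:=CV) f p q) <= M / p.
Proof.
  intros Hc Hd Hp Hpq. assert (HM := dom_M_ge0 _ _ Hd).
  assert (M / p - M / q <= M / p).
  { assert (0 <= M / q) by (apply Rdiv_le_0_compat; lra). lra. }
  eapply Rle_trans; [|exact H].
  rewrite Cmod_norm.
  apply (norm_RInt_le (V:=CV) f (fun s => M / s^2) p q); auto.
  - intros x Hx. rewrite <- Cmod_norm. eapply Rle_trans. apply dom_pt; eauto.
    apply Rmult_le_compat_l; auto. apply Rinv_le_contravar. nra. lra.
  - apply RInt_correct. apply ex_RInt_C; auto.
  - apply is_RInt_invsq; lra.
Qed.

Lemma tail_neg (f : R -> C) M p q : ccont f -> dom f M -> p <= -1 -> q <= p ->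
  Cmod (RInt (V:=CV) f q p) <= M / (- p).
Proof.
  intros Hc Hd Hp Hpq. assert (HM := dom_M_ge0 _ _ Hd).
  assert (M / q - M / p <= M / (- p)).
  { assert (M / q <= 0). { unfold Rdiv. assert (/ q < 0) by (apply Rinv_lt_0_compat; lra). nra. }
    replace (M / (-p)) with (- (M / p)) by (field; lra). lra. }
  eapply Rle_trans; [|exact H].
  rewrite Cmod_norm.
  apply (norm_RInt_le (V:=CV) f (fun s => M / s^2) q p); auto.
  - intros x Hx. rewrite <- Cmod_norm. eapply Rle_trans. apply dom_pt; eauto.
    apply Rmult_le_compat_l; auto. apply Rinv_le_contravar. nra. lra.
  - apply RInt_correct. apply ex_RInt_C; auto.
  - apply is_RInt_invsq_neg; lra.
Qed.

Lemma Cmod_RInt_swap (f : R -> C) a b : ccont f ->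
  Cmod (RInt (V:=CV) f a b) = Cmod (RInt (V:=CV) f b a).
Proof.
  intros Hc. rewrite <- (opp_RInt_swap (V:=CV)) by (apply ex_RInt_C; auto).
  rewrite !Cmod_norm. now rewrite (norm_opp (V:=CV)).
Qed.

Lemma tail_any_pos (f : R -> C) M N p q : ccont f -> dom f M -> 1 <= N -> N <= p -> N <= q ->
  Cmod (RInt (V:=CV) f p q) <= M / N.
Proof.
  intros Hc Hd HN Hp Hq. assert (HM := dom_M_ge0 _ _ Hd).
  destruct (Rle_dec p q).
  - eapply Rle_trans. apply tail_pos; eauto; lra.
    unfold Rdiv. apply Rmult_le_compat_l; auto. apply Rinv_le_contravar; lra.
  - rewrite Cmod_RInt_swap; auto. eapply Rle_trans. apply tail_pos; eauto; lra.
    unfold Rdiv. apply Rmult_le_compat_l; auto. apply Rinv_le_contravar; lra.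
Qed.

Lemma tail_any_neg (f : R -> C) M N p q : ccont f -> dom f M -> 1 <= N -> p <= - N -> q <= - N ->
  Cmod (RInt (V:=CV) f p q) <= M / N.
Proof.
  intros Hc Hd HN Hp Hq. assert (HM := dom_M_ge0 _ _ Hd).
  destruct (Rle_dec p q).
  - eapply Rle_trans. apply tail_neg; eauto; lra.
    unfold Rdiv. apply Rmult_le_compat_l; auto. apply Rinv_le_contravar; lra.
  - rewrite Cmod_RInt_swap; auto. eapply Rle_trans. apply tail_neg; eauto; lra.
    unfold Rdiv. apply Rmult_le_compat_l; auto. apply Rinv_le_contravar; lra.
Qed.

Lemma RInt_diff_tails (f : R -> C) a b a' b' : ccont f ->
  (RInt (V:=CV) f a' b' - RInt (V:=CV) f a b)%C =
  (RInt (V:=CV) f a' a + RInt (V:=CV) f b b')%C.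
Proof.
  intros Hc.
  rewrite <- (RInt_Chasles (V:=CV) f a' a b') by (apply ex_RInt_C; auto).
  rewrite <- (RInt_Chasles (V:=CV) f a b b') by (apply ex_RInt_C; auto).
  change (plus ?x ?y) with (Cplus x y). simplC. ring.
Qed.

Lemma ex_int_dom (f : R -> C) M : ccont f -> dom f M ->
  ex_RInt_gen (V:=CV) f (Rbar_locally m_infty) (Rbar_locally p_infty).
Proof.
  intros Hc Hd. assert (HM := dom_M_ge0 _ _ Hd).
  assert (Hprop : ProperFilter (filter_prod (Rbar_locally m_infty) (Rbar_locally p_infty))).
  { apply filter_prod_proper; apply Rbar_locally_filter. }
  destruct (proj1 (filterlim_locally_cauchy (U:=CV)
     (F := filter_prod (Rbar_locally m_infty) (Rbar_locally p_infty))
     (fun ab => RInt (V:=CV) f (fst ab) (snd ab)))) as [y Hy].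
  - intros eps.
    set (N := Rmax 1 (2 * (M + 1) / eps)).
    assert (HN1 : 1 <= N) by apply Rmax_l.
    assert (HN2 : 2 * (M + 1) / eps <= N) by apply Rmax_r.
    assert (Heps := cond_pos eps).
    assert (H1 : 2*(M+1) <= eps*N).
    { replace (2*(M+1)) with (eps * (2*(M+1)/eps)) by (field; lra).
      apply Rmult_le_compat_l; lra. }
    assert (HMN : M / N < eps / 2).
    { unfold Rdiv. apply Rmult_lt_reg_r with (2*N). lra.
      replace (M * / N * (2*N)) with (2*M) by (field; lra).
      replace (eps * /2 * (2*N)) with (eps*N) by field. lra. }
    exists (fun ab => fst ab < - N /\ N < snd ab). split.
    + exists (fun a => a < - N) (fun b => N < b).
      * exists (-N). auto.
      * exists N. auto.
      * intros a b Ha Hb. simpl. auto.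
    + intros [a b] [a' b'] [Ha Hb] [Ha' Hb']. simpl in *.
      apply (norm_compat1 (V:=CV)). rewrite <- Cmod_norm.
      change (minus ?x ?y) with (Cminus x y).
      rewrite RInt_diff_tails by auto.
      eapply Rle_lt_trans. apply Cmod_triangle.
      assert (Cmod (RInt (V:=CV) f a' a) <= M / N) by (apply tail_any_neg; auto; lra).
      assert (Cmod (RInt (V:=CV) f b b') <= M / N) by (apply tail_any_pos; auto; lra).
      lra.
  - exists y. intros P HP. specialize (Hy P HP).
    unfold filtermapi. revert Hy. unfold filtermap. apply filter_imp. intros [a b] HP'. exists (RInt (V:=CV) f a b).
    split; auto. apply RInt_correct. apply ex_RInt_C; auto.
Qed.

Lemma ccont_mult f g : ccont f -> ccont g -> ccont (fun s => Cmult (f s) (g s)).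
Proof. intros Hf Hg s. apply cont_Cmult; auto. Qed.

Lemma ccont_plus f g : ccont f -> ccont g -> ccont (fun s => Cplus (f s) (g s)).
Proof.
  intros Hf Hg s. apply cont_C_intro; simpl.
  - apply (continuous_plus (V:=R_NormedModule)); apply cont_C_Re; auto.
  - apply (continuous_plus (V:=R_NormedModule)); apply cont_C_Im; auto.
Qed.

Lemma ccont_pair (u v : R -> R) : (forall s, continuous u s) -> (forall s, continuous v s) ->
  ccont (fun s => (u s, v s)).
Proof. intros Hu Hv s. apply cont_C_intro; simpl; auto. Qed.

Lemma ccont_const (c : C) : ccont (fun _ => c).
Proof. intros s. apply continuous_const. Qed.

Lemma ccont_real (u : R -> R) : (forall s, continuous u s) -> ccont (fun s => RtoC (u s)).
Proof. intros Hu. apply ccont_pair; auto. intros s; apply continuous_const. Qed.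

Lemma ccont_Re f : ccont f -> forall s, continuous (fun s => Re (f s)) s.
Proof. intros H s. apply cont_C_Re; auto. Qed.
Lemma ccont_Im f : ccont f -> forall s, continuous (fun s => Im (f s)) s.
Proof. intros H s. apply cont_C_Im; auto. Qed.

Lemma ccont_ext f g : (forall s, f s = g s) -> ccont f -> ccont g.
Proof. intros H Hf. replace g with f; auto. apply functional_extensionality; auto. Qed.

Lemma ccont_inv f : ccont f -> (forall s, f s <> 0%C) -> ccont (fun s => Cinv (f s)).
Proof.
  intros Hf Hn.
  assert (Hpos : forall s, 0 < Re (f s) ^ 2 + Im (f s) ^ 2).
  { intros s. specialize (Hn s). destruct (f s) as [p q]. simpl.
    destruct (Req_dec p 0); destruct (Req_dec q 0).
    - subst. exfalso. apply Hn. reflexivity.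
    - nra. - nra. - nra. }
  apply ccont_pair; intros s.
  - apply continuous_ext with (fun s => Re (f s) / (Re (f s) ^ 2 + Im (f s) ^ 2)).
    { intros t. specialize (Hpos t). unfold Cinv. destruct (f t) as [p q]; simpl in *. field.
      intro H; nra. }
    apply (continuous_mult (K:=R_AbsRing)). apply ccont_Re; auto.
    apply continuous_comp with (g := Rinv) (f := fun s => Re (f s) ^ 2 + Im (f s) ^ 2).
    + apply (continuous_plus (V:=R_NormedModule)).
      * apply continuous_comp with (g := fun x => x ^ 2). apply ccont_Re; auto.
        apply cont_of_ex. auto_derive. auto.
      * apply continuous_comp with (g := fun x => x ^ 2). apply ccont_Im; auto.
        apply cont_of_ex. auto_derive. auto.
    + apply cont_of_ex. auto_derive. specialize (Hpos s). lra.
  - apply continuous_ext with (fun s => - Im (f s) / (Re (f s) ^ 2 + Im (f s) ^ 2)).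
    { intros t. specialize (Hpos t). unfold Cinv. destruct (f t) as [p q]; simpl in *. field.
      intro H; nra. }
    apply (continuous_mult (K:=R_AbsRing)).
    apply (continuous_opp (V:=R_NormedModule)). apply ccont_Im; auto.
    apply continuous_comp with (g := Rinv) (f := fun s => Re (f s) ^ 2 + Im (f s) ^ 2).
    + apply (continuous_plus (V:=R_NormedModule)).
      * apply continuous_comp with (g := fun x => x ^ 2). apply ccont_Re; auto.
        apply cont_of_ex. auto_derive. auto.
      * apply continuous_comp with (g := fun x => x ^ 2). apply ccont_Im; auto.
        apply cont_of_ex. auto_derive. auto.
    + apply cont_of_ex. auto_derive. specialize (Hpos s). lra.
Qed.

Lemma is_RInt_Cmult_l (f : R -> C) a b (l : C) (c : C) :
  is_RInt (V:=CV) f a b l -> is_RInt (V:=CV) (fun s => Cmult c (f s)) a b (Cmult c l).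
Proof.
  intros H.
  assert (H1 := is_RInt_fct_extend_fst (U:=R_NormedModule) (V:=R_NormedModule) f a b l H).
  assert (H2 := is_RInt_fct_extend_snd (U:=R_NormedModule) (V:=R_NormedModule) f a b l H).
  destruct c as [c1 c2].
  apply (is_RInt_fct_extend_pair (U:=R_NormedModule) (V:=R_NormedModule)); simpl.
  - apply (is_RInt_minus (V:=R_NormedModule)); apply (is_RInt_scal (V:=R_NormedModule)); auto.
  - apply (is_RInt_plus (V:=R_NormedModule)); apply (is_RInt_scal (V:=R_NormedModule)); auto.
Qed.

Lemma RInt_Cmult_l (f : R -> C) a b c : ccont f ->
  RInt (V:=CV) (fun s => Cmult c (f s)) a b = Cmult c (RInt (V:=CV) f a b).
Proof.
  intros Hf. apply is_RInt_unique. apply is_RInt_Cmult_l. apply RInt_correct. apply ex_RInt_C; auto.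
Qed.

Lemma RInt_Cplus (f g : R -> C) a b : ccont f -> ccont g ->
  RInt (V:=CV) (fun s => Cplus (f s) (g s)) a b = Cplus (RInt (V:=CV) f a b) (RInt (V:=CV) g a b).
Proof.
  intros Hf Hg. apply (RInt_plus (V:=CV)); apply ex_RInt_C; auto.
Qed.

Lemma dom_plus f g M1 M2 : dom f M1 -> dom g M2 -> dom (fun s => Cplus (f s) (g s)) (M1 + M2).
Proof.
  intros H1 H2 s. specialize (H1 s). specialize (H2 s).
  generalize (Cmod_triangle (f s) (g s)). assert (0 <= s^2) by nra. nra.
Qed.

Lemma dom_cmul f M c : dom f M -> dom (fun s => Cmult c (f s)) (Cmod c * M).
Proof.
  intros H s. rewrite Cmod_mult. specialize (H s). generalize (Cmod_ge_0 c). 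
  rewrite Rmult_assoc. intros; apply Rmult_le_compat_l; auto.
Qed.

Lemma dom_le f g M : (forall s, Cmod (g s) <= Cmod (f s)) -> dom f M -> dom g M.
Proof.
  intros H Hf s. eapply Rle_trans; [|apply (Hf s)]. apply Rmult_le_compat_r. nra. auto.
Qed.

Lemma int_R_ex f M : ccont f -> dom f M ->
  is_RInt_gen (V:=CV) f (Rbar_locally m_infty) (Rbar_locally p_infty) (int_R f).
Proof. intros Hc Hd. apply RInt_gen_correct. eapply ex_int_dom; eauto. Qed.

Lemma int_R_plus f g M1 M2 : ccont f -> dom f M1 -> ccont g -> dom g M2 ->
  int_R (fun s => Cplus (f s) (g s)) = Cplus (int_R f) (int_R g).
Proof.
  intros Hf Hf' Hg Hg'. unfold int_R at 1. apply (is_RInt_gen_unique (V:=CV)).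
  apply (is_RInt_gen_plus (V:=CV)); eapply int_R_ex; eauto.
Qed.

Lemma int_R_cmul f M c : ccont f -> dom f M ->
  int_R (fun s => Cmult c (f s)) = Cmult c (int_R f).
Proof.
  intros Hf Hd. apply int_R_eq_approx.
  - intros a b. apply ex_RInt_C. apply ccont_mult; auto. apply ccont_const.
  - intros eps Heps.
    destruct (int_R_approx f (fun a b => ex_RInt_C f a b Hf) (ex_int_dom f M Hf Hd)
       (eps / (Cmod c + 1))) as [N HN].
    { apply Rdiv_lt_0_compat; auto. generalize (Cmod_ge_0 c); lra. }
    exists N. intros a b Ha Hb. rewrite RInt_Cmult_l by auto.
    assert (Hr : forall u v w : C, (w*u - w*v = w*(u-v))%C) by (intros; ring).
    rewrite Hr.
    rewrite Cmod_mult. specialize (HN a b Ha Hb).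
    assert (0 <= Cmod c) by apply Cmod_ge_0.
    assert (Cmod c * Cmod (RInt (V:=CV) f a b - int_R f) <= Cmod c * (eps / (Cmod c + 1))).
    { apply Rmult_le_compat_l; auto. lra. }
    assert (Cmod c * (eps / (Cmod c + 1)) < eps).
    { apply Rmult_lt_reg_r with (Cmod c + 1). lra. field_simplify; try lra. }
    lra.
Qed.

Lemma int_R_ext f g : (forall s, f s = g s) -> int_R f = int_R g.
Proof. intros H. f_equal. apply functional_extensionality; auto. Qed.

Lemma Cmod_sub_le (u v : C) : Cmod v <= Cmod u + Cmod (u - v).
Proof.
  replace v with (u + - (u - v))%C at 1 by ring.
  eapply Rle_trans. apply Cmod_triangle. rewrite Cmod_opp. lra.
Qed.

Lemma int_R_bound f M B : ccont f -> dom f M ->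
  (forall a b, a <= b -> Cmod (RInt (V:=CV) f a b) <= B) -> Cmod (int_R f) <= B.
Proof.
  intros Hc Hd HB.
  apply Rnot_lt_le. intros Hlt.
  destruct (int_R_approx f (fun a b => ex_RInt_C f a b Hc) (ex_int_dom f M Hc Hd)
      (Cmod (int_R f) - B)) as [N HN]. lra.
  specialize (HN (- Rabs N - 1) (Rabs N + 1)).
  assert (HN' : Cmod (RInt (V:=CV) f (- Rabs N - 1) (Rabs N + 1) - int_R f) < Cmod (int_R f) - B).
  { apply HN; generalize (RRle_abs N) (Rabs_pos N) (RRle_abs (-N)); rewrite Rabs_Ropp; lra. }
  specialize (HB (- Rabs N - 1) (Rabs N + 1)).
  assert (Cmod (RInt (V:=CV) f (- Rabs N - 1) (Rabs N + 1)) <= B) by (apply HB; generalize (Rabs_pos N); lra).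
  assert (Cmod (int_R f) <= Cmod (RInt (V:=CV) f (- Rabs N - 1) (Rabs N + 1)) +
                           Cmod (RInt (V:=CV) f (- Rabs N - 1) (Rabs N + 1) - int_R f)).
  { apply Cmod_sub_le. }
  lra.
Qed.

Lemma taylor_real (g g1 g2 : R -> R) u h B :
  (forall t, is_derive g t (g1 t)) -> (forall t, is_derive g1 t (g2 t)) ->
  (forall t, Rabs (t - u) <= Rabs h -> Rabs (g2 t) <= B) ->
  Rabs (g (u + h) - g u - h * g1 u) <= B * h^2.
Proof.
  intros Hg Hg1 HB.
  destruct (MVT_cor4 g g1 u (Rabs h) (fun c _ => Hg c) (u + h)) as [c [Hc1 Hc2]].
  { replace (u + h - u) with h by ring. lra. }
  replace (u + h - u) with h in Hc1, Hc2 by ring.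
  destruct (MVT_cor4 g1 g2 u (Rabs h) (fun c _ => Hg1 c) c) as [c' [Hc1' Hc2']].
  { lra. }
  rewrite Hc1. replace (g1 c * h - h * g1 u) with (h * (g1 c - g1 u)) by ring.
  rewrite Hc1'. rewrite !Rabs_mult.
  assert (Rabs (g2 c') <= B) by (apply HB; lra).
  assert (0 <= Rabs (g2 c')) by apply Rabs_pos.
  replace (h^2) with (Rabs h * Rabs h) by (rewrite <- Rabs_mult; rewrite Rabs_right; [ring| nra]).
  assert (0 <= Rabs h) by apply Rabs_pos.
  assert (0 <= Rabs (c - u)) by apply Rabs_pos.
  apply Rle_trans with (Rabs h * (B * Rabs h)).
  - apply Rmult_le_compat_l; auto. apply Rmult_le_compat; auto; lra.
  - lra.
Qed.

Definition E (a th t : R) : C := (exp (- a * t) * cos (th * t), exp (- a * t) * sin (th * t)).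

Lemma Cmod_le_sum (z : C) : Cmod z <= Rabs (Re z) + Rabs (Im z).
Proof.
  destruct z as [p q]. unfold Cmod. simpl.
  rewrite <- (sqrt_Rsqr (Rabs p + Rabs q)) by (generalize (Rabs_pos p) (Rabs_pos q); lra).
  apply sqrt_le_1_alt. unfold Rsqr.
  generalize (Rabs_pos p) (Rabs_pos q). 
  replace (p * (p * 1)) with (Rabs p * Rabs p) by (rewrite <- Rabs_mult; rewrite Rabs_right; [ring | nra]).
  replace (q * (q * 1)) with (Rabs q * Rabs q) by (rewrite <- Rabs_mult; rewrite Rabs_right; [ring | nra]).
  nra.
Qed.

Lemma abs_le_sq (X Y : R) : 0 <= Y -> X^2 <= Y^2 -> Rabs X <= Y.
Proof.
  intros HY H. assert (H' : Rsqr X <= Rsqr Y) by (unfold Rsqr; nra).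
  apply Rsqr_le_abs_0 in H'. rewrite (Rabs_right Y) in H' by lra. exact H'.
Qed.

Lemma trig_comb (a th c s : R) : c^2 + s^2 = 1 ->
  Rabs ((a^2 - th^2) * c + 2 * a * th * s) <= a^2 + th^2.
Proof.
  intros H. apply abs_le_sq. nra.
  assert (Hid : ((a^2 - th^2) * c + 2 * a * th * s)^2 + ((a^2 - th^2) * s - 2 * a * th * c)^2
          = (a^2 + th^2)^2 * (c^2 + s^2)) by ring.
  rewrite H, Rmult_1_r in Hid.
  assert (0 <= ((a^2 - th^2) * c + 2 * a * th * s)^2) by apply pow2_ge_0.
  assert (0 <= ((a^2 - th^2) * s - 2 * a * th * c)^2) by apply pow2_ge_0.
  lra.
Qed.

Lemma trig_comb2 (a th c s : R) : c^2 + s^2 = 1 ->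
  Rabs ((a^2 - th^2) * s - 2 * a * th * c) <= a^2 + th^2.
Proof.
  intros H. apply abs_le_sq. nra.
  assert (Hid : ((a^2 - th^2) * c + 2 * a * th * s)^2 + ((a^2 - th^2) * s - 2 * a * th * c)^2
          = (a^2 + th^2)^2 * (c^2 + s^2)) by ring.
  rewrite H, Rmult_1_r in Hid.
  assert (0 <= ((a^2 - th^2) * c + 2 * a * th * s)^2) by apply pow2_ge_0.
  assert (0 <= ((a^2 - th^2) * s - 2 * a * th * c)^2) by apply pow2_ge_0.
  lra.
Qed.

Lemma exp_mono x y : x <= y -> exp x <= exp y.
Proof. intros [H|H]. left; apply exp_increasing; auto. subst; lra. Qed.

Lemma exp_shift (a u t : R) : Rabs (t - u) <= 1 -> exp (- a * t) <= exp (- a * u) * exp (Rabs a).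
Proof.
  intros H. rewrite <- exp_plus. apply exp_mono.
  assert (Rabs (a * (t - u)) <= Rabs a).
  { rewrite Rabs_mult. generalize (Rabs_pos a) (Rabs_pos (t - u)); nra. }
  assert (- (a * (t - u)) <= Rabs (a * (t - u))) by (rewrite <- Rabs_Ropp; apply RRle_abs).
  lra.
Qed.

Definition Cmk (p q : R) : C := (p, q).

Lemma E_taylor a th u h : Rabs h <= 1 ->
  Cmod (E a th (u + h) - E a th u - RtoC h * (Cmk (- a) th * E a th u))%C
   <= 2 * ((a^2 + th^2) * (exp (- a * u) * exp (Rabs a))) * h^2.
Proof.
  intros Hh. eapply Rle_trans. apply Cmod_le_sum.
  set (B := (a^2 + th^2) * (exp (- a * u) * exp (Rabs a))).
  assert (HBt : forall t, Rabs (t - u) <= Rabs h -> exp (- a * t) * (a^2 + th^2) <= B).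
  { intros t Ht. unfold B. rewrite Rmult_comm. apply Rmult_le_compat_l. nra.
    apply exp_shift. lra. }
  assert (Hcs : forall t, cos (th * t) ^ 2 + sin (th * t) ^ 2 = 1).
  { intros t. generalize (sin2_cos2 (th * t)). unfold Rsqr. intros; nra. }
  pose (g := fun t => exp (- a * t) * cos (th * t)).
  pose (g1 := fun t => - a * (exp (- a * t) * cos (th * t)) - th * (exp (- a * t) * sin (th * t))).
  pose (g2 := fun t => exp (- a * t) * ((a^2 - th^2) * cos (th * t) + 2 * a * th * sin (th * t))).
  pose (k := fun t => exp (- a * t) * sin (th * t)).
  pose (k1 := fun t => - a * (exp (- a * t) * sin (th * t)) + th * (exp (- a * t) * cos (th * t))).
  pose (k2 := fun t => exp (- a * t) * ((a^2 - th^2) * sin (th * t) - 2 * a * th * cos (th * t))).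
  assert (T1 : Rabs (g (u + h) - g u - h * g1 u) <= B * h^2).
  { apply taylor_real with g2.
    - intros t. unfold g, g1. auto_derive; auto. ring.
    - intros t. unfold g1, g2. auto_derive; auto. ring.
    - intros t Ht. unfold g2. rewrite Rabs_mult. rewrite (Rabs_right (exp _)) by (left; apply exp_pos).
      eapply Rle_trans; [|apply (HBt t Ht)]. apply Rmult_le_compat_l. left; apply exp_pos.
      apply trig_comb; auto. }
  assert (T2 : Rabs (k (u + h) - k u - h * k1 u) <= B * h^2).
  { apply taylor_real with k2.
    - intros t. unfold k, k1. auto_derive; auto. ring.
    - intros t. unfold k1, k2. auto_derive; auto. ring.
    - intros t Ht. unfold k2. rewrite Rabs_mult. rewrite (Rabs_right (exp _)) by (left; apply exp_pos).
      eapply Rle_trans; [|apply (HBt t Ht)]. apply Rmult_le_compat_l. left; apply exp_pos.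
      apply trig_comb2; auto. }
  replace (Re (E a th (u + h) - E a th u - RtoC h * (Cmk (- a) th * E a th u))%C) with
    (g (u + h) - g u - h * g1 u) by (unfold g, g1, Cmk, E, Cminus, Cplus, Copp, Cmult, RtoC; simpl; ring).
  replace (Im (E a th (u + h) - E a th u - RtoC h * (Cmk (- a) th * E a th u))%C) with
    (k (u + h) - k u - h * k1 u) by (unfold k, k1, Cmk, E, Cminus, Cplus, Copp, Cmult, RtoC; simpl; ring).
  lra.
Qed.

Lemma Cmod_E a th t : Cmod (E a th t) = exp (- a * t).
Proof.
  unfold E, Cmod. simpl. 
  replace (exp (- a * t) * cos (th * t) * (exp (- a * t) * cos (th * t) * 1) +
    exp (- a * t) * sin (th * t) * (exp (- a * t) * sin (th * t) * 1)) with
    (exp (- a * t) ^ 2 * (Rsqr (sin (th * t)) + Rsqr (cos (th * t)))) by (unfold Rsqr; ring).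
  rewrite sin2_cos2, Rmult_1_r. apply sqrt_pow2. left; apply exp_pos.
Qed.

Lemma E_cont a th : ccont (fun t => E a th t).
Proof. apply ccont_pair; intros s; apply cont_of_ex; auto_derive; auto. Qed.

Ltac pos := match goal with
  | |- 0 <= ?a * ?b => apply Rmult_le_pos; pos
  | |- _ => first [lra | apply pow2_ge_0 | apply Rabs_pos | apply Cmod_ge_0 | (left; apply exp_pos) | (generalize PI_RGT_0; nra) | idtac]
  end.

Lemma is_RInt_atan M a b : a <= b ->
  is_RInt (fun s => M / (1 + s^2)) a b (M * atan b - M * atan a).
Proof.
  intros Hab.
  replace (M * atan b - M * atan a) with (minus ((fun s => M * atan s) b) ((fun s => M * atan s) a))
    by (unfold minus, plus, opp; simpl; ring).
  apply (is_RInt_derive (V:=R_CompleteNormedModule) (fun s => M * atan s)).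
  - intros x Hx. auto_derive; auto. field. nra.
  - intros x Hx. apply cont_of_ex. auto_derive. nra.
Qed.

Lemma RInt_dom_bound f M a b : ccont f -> dom f M -> a <= b ->
  Cmod (RInt (V:=CV) f a b) <= PI * M.
Proof.
  intros Hc Hd Hab. assert (HM := dom_M_ge0 _ _ Hd).
  apply Rle_trans with (M * atan b - M * atan a).
  - rewrite Cmod_norm.
    apply (norm_RInt_le (V:=CV) f (fun s => M / (1 + s^2)) a b); auto.
    + intros x Hx. rewrite <- Cmod_norm. apply dom_pt; auto.
    + apply RInt_correct. apply ex_RInt_C; auto.
    + apply is_RInt_atan; auto.
  - generalize (atan_bound a) (atan_bound b). intros. nra.
Qed.

Lemma int_R_dom_bound f M : ccont f -> dom f M -> Cmod (int_R f) <= PI * M.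
Proof.
  intros Hc Hd. apply int_R_bound with M; auto. intros; apply RInt_dom_bound; auto.
Qed.

Definition rapid (psi : R -> C) :=
  ccont psi /\ forall m : nat, exists M, forall s, Cmod (psi s) * Rabs s ^ m <= M.

Lemma rapid_dom psi m : rapid psi -> exists M, forall s, Cmod (psi s) * Rabs s ^ m * (1 + s^2) <= M.
Proof.
  intros [_ H]. destruct (H m) as [M1 H1]. destruct (H (m + 2)%nat) as [M2 H2].
  exists (M1 + M2). intros s. specialize (H1 s). specialize (H2 s).
  rewrite pow_add in H2. replace (Rabs s ^ 2) with (s^2) in H2.
  - nra.
  - rewrite RPow_abs. rewrite Rabs_right; [reflexivity | nra].
Qed.

Lemma rapid_dom0 psi : rapid psi -> exists M, dom psi M.
Proof.
  intros H. destruct (rapid_dom psi 0 H) as [M HM]. exists M. intros s. specialize (HM s).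
  simpl in HM. lra.
Qed.

Lemma cont_pow j : forall s, continuous (fun s => s ^ j) s.
Proof. intros s. apply cont_of_ex. auto_derive. auto. Qed.

Lemma rapid_pow psi j : rapid psi -> rapid (fun s => (RtoC (s ^ j) * psi s)%C).
Proof.
  intros [Hc H]. split.
  - apply ccont_mult; auto. apply ccont_real. apply cont_pow.
  - intros m. destruct (H (j + m)%nat) as [M HM]. exists M. intros s.
    rewrite Cmod_mult, Cmod_R. rewrite <- RPow_abs. specialize (HM s). rewrite pow_add in HM. replace (Rabs s ^ j * Cmod (psi s) * Rabs s ^ m) with (Cmod (psi s) * (Rabs s ^ j * Rabs s ^ m)) by ring. exact HM.
Qed.

Lemma cexpi_E s xi : cexpi (- (2 * PI * s * xi)) = E 0 (- (2 * PI * s)) xi.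
Proof.
  unfold cexpi, E. replace (- 0 * xi) with 0 by ring. rewrite exp_0.
  f_equal; [rewrite Rmult_1_l | rewrite Rmult_1_l]; f_equal; ring.
Qed.

Lemma ccont_minus f g : ccont f -> ccont g -> ccont (fun s => Cminus (f s) (g s)).
Proof.
  intros Hf Hg s. apply cont_C_intro; simpl.
  - apply (continuous_minus (V:=R_NormedModule)); apply cont_C_Re; auto.
  - apply (continuous_minus (V:=R_NormedModule)); apply cont_C_Im; auto.
Qed.

Lemma dom_minus f g M1 M2 : dom f M1 -> dom g M2 -> dom (fun s => Cminus (f s) (g s)) (M1 + M2).
Proof.
  intros H1 H2 s. specialize (H1 s). specialize (H2 s).
  unfold Cminus. generalize (Cmod_triangle (f s) (- g s)). rewrite Cmod_opp. assert (0 <= s^2) by nra. nra.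
Qed.

Lemma int_R_minus f g M1 M2 : ccont f -> dom f M1 -> ccont g -> dom g M2 ->
  int_R (fun s => Cminus (f s) (g s)) = Cminus (int_R f) (int_R g).
Proof.
  intros Hf Hf' Hg Hg'. unfold int_R at 1. apply (is_RInt_gen_unique (V:=CV)).
  apply (is_RInt_gen_minus (V:=CV)); eapply int_R_ex; eauto.
Qed.

Lemma int_R_lin3 f g e M1 M2 M3 c : ccont f -> dom f M1 -> ccont g -> dom g M2 -> ccont e -> dom e M3 ->
  (int_R f - int_R g - c * int_R e)%C = int_R (fun s => f s - g s - c * e s)%C.
Proof.
  intros. rewrite <- (int_R_cmul e M3 c) by auto.
  rewrite <- (int_R_minus f g M1 M2) by auto.
  rewrite <- (int_R_minus (fun s => f s - g s)%C (fun s => c * e s)%C (M1 + M2) (Cmod c * M3)); auto.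
  - apply ccont_minus; auto.
  - apply dom_minus; auto.
  - apply ccont_mult; auto. apply ccont_const.
  - apply dom_cmul; auto.
Qed.

Lemma cexpi_cont (k : R) : ccont (fun s => cexpi (k * s)).
Proof. apply ccont_pair; intros s; apply cont_of_ex; auto_derive; auto. Qed.

Lemma Cmod_cexpi t : Cmod (cexpi t) = 1.
Proof.
  unfold cexpi, Cmod. simpl. replace (cos t * (cos t * 1) + sin t * (sin t * 1)) with 1. apply sqrt_1. generalize (sin2_cos2 t). unfold Rsqr. nra.
Qed.

Lemma dom_unit f u M : (forall s, Cmod (u s) = 1) -> dom f M -> dom (fun s => f s * u s)%C M.
Proof. intros Hu Hd s. rewrite Cmod_mult, Hu, Rmult_1_r. apply Hd. Qed.

Lemma ft_integrand_cont psi xi : ccont psi -> ccont (fun s => psi s * cexpi (- (2 * PI * s * xi)))%C.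
Proof.
  intros Hc. apply ccont_mult; auto.
  apply ccont_ext with (fun s => cexpi ((- (2 * PI * xi)) * s)).
  - intros s; f_equal; ring.
  - apply cexpi_cont.
Qed.

Lemma ft_taylor psi : rapid psi -> exists K, forall xi h, Rabs h <= 1 ->
  Cmod (fourier psi (xi + h) - fourier psi xi
        - RtoC h * (Cmk 0 (- (2 * PI)) * fourier (fun s => RtoC s * psi s)%C xi))%C <= K * h^2.
Proof.
  intros Hr. assert (Hc := proj1 Hr).
  destruct (rapid_dom0 psi Hr) as [M0 H0].
  destruct (rapid_dom0 _ (rapid_pow psi 1 Hr)) as [M1 H1].
  destruct (rapid_dom psi 2 Hr) as [M2 H2].
  exists (PI * (8 * PI^2 * M2)). intros xi h Hh.
  unfold fourier. rewrite Cmult_assoc. rewrite (int_R_lin3 _ _ _ M0 M0 M1).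
  - eapply Rle_trans. apply int_R_dom_bound with (M := 8 * PI^2 * M2 * h^2).
    + apply ccont_minus. apply ccont_minus. apply ft_integrand_cont; auto. apply ft_integrand_cont; auto.
      apply ccont_mult. apply ccont_const. apply ft_integrand_cont. apply ccont_mult; auto.
      apply ccont_real. intros; apply cont_of_ex; auto_derive; auto.
    + intros s.
      replace ((psi s * cexpi (- (2 * PI * s * (xi + h))) - psi s * cexpi (- (2 * PI * s * xi)) -
        RtoC h * Cmk 0 (- (2 * PI)) * (RtoC s * psi s * cexpi (- (2 * PI * s * xi))))%C) with
        (psi s * (E 0 (- (2 * PI * s)) (xi + h) - E 0 (- (2 * PI * s)) xi -
           RtoC h * (Cmk (- 0) (- (2 * PI * s)) * E 0 (- (2 * PI * s)) xi)))%C.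
      * rewrite Cmod_mult. specialize (H2 s).
        assert (HT := E_taylor 0 (- (2 * PI * s)) xi h Hh).
        replace (- 0 * xi) with 0 in HT by ring. rewrite exp_0, Rabs_R0, exp_0 in HT.
        assert (HC := Cmod_ge_0 (psi s)).
        assert (Hs : Rabs s ^ 2 = s^2) by (rewrite RPow_abs; apply Rabs_right; nra).
        rewrite Hs in H2.
        apply Rle_trans with (Cmod (psi s) * (2 * ((0 ^ 2 + (- (2 * PI * s)) ^ 2) * (1 * 1)) * h ^ 2) * (1 + s^2)).
        { apply Rmult_le_compat_r. nra. apply Rmult_le_compat_l; auto. }
        replace (Cmod (psi s) * (2 * ((0 ^ 2 + (- (2 * PI * s)) ^ 2) * (1 * 1)) * h ^ 2) * (1 + s ^ 2))
          with ((8 * PI^2 * h^2) * (Cmod (psi s) * s ^ 2 * (1 + s ^ 2))) by ring.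
        replace (8 * PI ^ 2 * M2 * h ^ 2) with ((8 * PI^2 * h^2) * M2) by ring.
        apply Rmult_le_compat_l; auto. nra.
      * rewrite !cexpi_E. unfold Cmk. 
        replace (- 0) with 0 by ring. apply injective_projections; simpl; ring.
    + right. ring.
  - apply ft_integrand_cont; auto.
  - apply dom_unit; auto. intros; apply Cmod_cexpi.
  - apply ft_integrand_cont; auto.
  - apply dom_unit; auto. intros; apply Cmod_cexpi.
  - apply ft_integrand_cont. apply ccont_mult; auto. apply ccont_real. intros; apply cont_of_ex; auto_derive; auto.
  - apply dom_unit; auto. 
    + intros; apply Cmod_cexpi.
    + eapply dom_le; [|exact H1]. intros s. right. f_equal. f_equal. simpl. apply injective_projections; simpl; ring.
Qed.

Lemma taylor_K_ge0 (F : R -> C) (L : C) (K xi : R) :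
  (forall h, Rabs h <= 1 -> Cmod (F (xi + h)%R - F xi - RtoC h * L)%C <= K * h^2) -> 0 <= K.
Proof.
  intros H. specialize (H 1). rewrite Rabs_R1 in H. specialize (H (Rle_refl 1)).
  generalize (Cmod_ge_0 (F (xi + 1)%R - F xi - RtoC 1 * L)%C). intros. simpl in H. nra.
Qed.

Lemma taylor_deriv_zero (F : R -> C) (L : C) (K xi : R) d : 0 < d ->
  (forall h, Rabs h <= 1 -> Cmod (F (xi + h)%R - F xi - RtoC h * L)%C <= K * h^2) ->
  (forall h, Rabs h < d -> F (xi + h)%R = 0%C) -> L = 0%C.
Proof.
  intros Hd HT HZ. assert (HK := taylor_K_ge0 F L K xi HT).
  assert (H0 : F xi = 0%C) by (rewrite <- (Rplus_0_r xi); apply HZ; rewrite Rabs_R0; lra).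
  destruct (Req_dec (Cmod L) 0) as [E|E].
  - apply Cmod_eq_0; auto.
  - exfalso. assert (HL : 0 < Cmod L) by (generalize (Cmod_ge_0 L); lra).
    set (h := Rmin (Rmin (d/2) (1/2)) (Cmod L / (2 * (K + 1)))).
    assert (Hh1 : h <= d/2) by (unfold h; eapply Rle_trans; [apply Rmin_l|apply Rmin_l]).
    assert (Hh2 : h <= 1/2) by (unfold h; eapply Rle_trans; [apply Rmin_l|apply Rmin_r]).
    assert (Hh3 : h <= Cmod L / (2 * (K + 1))) by (unfold h; apply Rmin_r).
    assert (Hh0 : 0 < h).
    { unfold h. repeat apply Rmin_pos; try lra. apply Rdiv_lt_0_compat; lra. }
    specialize (HT h). rewrite Rabs_right in HT by lra. specialize (HT ltac:(lra)).
    rewrite H0, HZ in HT by (rewrite Rabs_right; lra).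
    replace (0 - 0 - RtoC h * L)%C with (- (RtoC h * L))%C in HT by ring.
    rewrite Cmod_opp, Cmod_mult, Cmod_R, Rabs_right in HT by lra.
    assert (Cmod L <= K * h) by (apply Rmult_le_reg_l with h; auto; nra).
    assert (K * h <= K * (Cmod L / (2 * (K + 1)))) by (apply Rmult_le_compat_l; auto).
    assert (K * (Cmod L / (2 * (K + 1))) < Cmod L).
    { replace (K * (Cmod L / (2 * (K + 1)))) with (Cmod L * (K / (2 * (K + 1)))) by (field; lra).
      assert (K / (2 * (K + 1)) < 1).
      { apply Rmult_lt_reg_r with (2 * (K + 1)). lra. field_simplify; lra. }
      nra. }
    lra.
Qed.

Lemma taylor_cont_zero (F : R -> C) (L : C) (K xi : R) d e : 0 < d -> e * e = 1 ->
  (forall h, Rabs h <= 1 -> Cmod (F (xi + h)%R - F xi - RtoC h * L)%C <= K * h^2) ->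
  (forall h, 0 < h < d -> F (xi + e * h)%R = 0%C) -> F xi = 0%C.
Proof.
  intros Hd He HT HZ. assert (HK := taylor_K_ge0 F L K xi HT).
  assert (Hae : Rabs e = 1).
  { assert (Rabs e * Rabs e = 1) by (rewrite <- Rabs_mult, He; apply Rabs_R1).
    generalize (Rabs_pos e). nra. }
  destruct (Req_dec (Cmod (F xi)) 0) as [E|E].
  - apply Cmod_eq_0; auto.
  - exfalso. assert (HL : 0 < Cmod (F xi)) by (generalize (Cmod_ge_0 (F xi)); lra).
    assert (HLL := Cmod_ge_0 L).
    set (h := Rmin (Rmin (d/2) (1/2)) (Cmod (F xi) / (2 * (K + Cmod L + 1)))).
    assert (Hh1 : h <= d/2) by (unfold h; eapply Rle_trans; [apply Rmin_l|apply Rmin_l]).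
    assert (Hh2 : h <= 1/2) by (unfold h; eapply Rle_trans; [apply Rmin_l|apply Rmin_r]).
    assert (Hh3 : h <= Cmod (F xi) / (2 * (K + Cmod L + 1))) by (unfold h; apply Rmin_r).
    assert (Hh0 : 0 < h).
    { unfold h. repeat apply Rmin_pos; try lra. apply Rdiv_lt_0_compat; lra. }
    specialize (HT (e * h)). rewrite Rabs_mult, Hae, Rabs_right in HT by lra.
    specialize (HT ltac:(lra)).
    rewrite HZ in HT by lra.
    assert (Cmod (F xi) <= Cmod (RtoC (e * h)%R * L) + K * (e * h) ^ 2).
    { replace (F xi) with (- (0 - F xi - RtoC (e * h)%R * L) - RtoC (e * h)%R * L)%C at 1 by ring.
      eapply Rle_trans. unfold Cminus at 1. apply Cmod_triangle. rewrite !Cmod_opp. lra. }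
    rewrite Cmod_mult, Cmod_R, Rabs_mult, Hae, Rabs_right in H by lra.
    replace ((e * h) ^ 2) with (h * h) in H by (simpl; nra).
    assert (K * (h * h) <= K * h) by (apply Rmult_le_compat_l; nra).
    assert (Cmod (F xi) <= h * (Cmod L + K)) by nra.
    assert (h * (Cmod L + K) <= Cmod (F xi) / (2 * (K + Cmod L + 1)) * (Cmod L + K))
      by (apply Rmult_le_compat_r; lra).
    assert (Cmod (F xi) / (2 * (K + Cmod L + 1)) * (Cmod L + K) < Cmod (F xi)).
    { replace (Cmod (F xi) / (2 * (K + Cmod L + 1)) * (Cmod L + K)) with
        (Cmod (F xi) * ((Cmod L + K) / (2 * (K + Cmod L + 1)))) by (field; lra).
      assert ((Cmod L + K) / (2 * (K + Cmod L + 1)) < 1).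
      { apply Rmult_lt_reg_r with (2 * (K + Cmod L + 1)). lra. field_simplify; lra. }
      nra. }
    lra.
Qed.

Definition psi_j (phi : R -> C) (j : nat) : R -> C := fun s => (RtoC (s ^ j) * phi s)%C.

Lemma Cmk_nz : Cmk 0 (- (2 * PI)) <> 0%C.
Proof.
  intros H. unfold Cmk in H. injection H. intros. generalize PI_RGT_0. lra.
Qed.

Lemma fourier_vanish_open phi d : rapid phi -> (forall xi, Rabs xi < d -> fourier phi xi = 0%C) ->
  forall j xi, Rabs xi < d -> fourier (psi_j phi j) xi = 0%C.
Proof.
  intros Hr H0. induction j as [|j IH]; intros xi Hxi.
  - rewrite <- (H0 xi Hxi). unfold fourier, psi_j. apply int_R_ext. intros s. simpl.
    rewrite Cmult_1_l. reflexivity.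
  - destruct (ft_taylor (psi_j phi j) (rapid_pow phi j Hr)) as [K HK].
    assert (HL := taylor_deriv_zero (fourier (psi_j phi j)) _ K xi (d - Rabs xi) ltac:(lra) (HK xi)).
    assert (Hz : (Cmk 0 (- (2 * PI)) * fourier (fun s => (RtoC s * psi_j phi j s)%C) xi)%C = 0%C).
    { apply HL. intros h Hh. apply IH.
      eapply Rle_lt_trans. apply Rabs_triang. lra. }
    replace (fourier (psi_j phi (S j)) xi) with (fourier (fun s => (RtoC s * psi_j phi j s)%C) xi).
    + replace (fourier (fun s => (RtoC s * psi_j phi j s)%C) xi) with
        (/ Cmk 0 (- (2 * PI)) * (Cmk 0 (- (2 * PI)) * fourier (fun s => (RtoC s * psi_j phi j s)%C) xi))%C.
      * rewrite Hz. ring.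
      * field. apply Cmk_nz.
    + unfold fourier, psi_j. apply int_R_ext. intros s. simpl. rewrite RtoC_mult. ring.
Qed.

Lemma fourier_vanish phi d : 0 < d -> rapid phi -> (forall xi, Rabs xi < d -> fourier phi xi = 0%C) ->
  forall j xi, Rabs xi <= d -> fourier (psi_j phi j) xi = 0%C.
Proof.
  intros Hd Hr H0 j xi Hxi.
  destruct (Rle_lt_or_eq_dec _ _ Hxi) as [Hlt|Heq].
  - eapply fourier_vanish_open; eauto.
  - destruct (ft_taylor (psi_j phi j) (rapid_pow phi j Hr)) as [K HK].
    destruct (Rle_dec 0 xi) as [Hp|Hn].
    + rewrite Rabs_right in Heq by lra. subst xi.
      apply (taylor_cont_zero _ _ K d d (-1) Hd ltac:(ring) (HK d)).
      intros h Hh. eapply fourier_vanish_open; eauto.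
      rewrite Rabs_right; lra.
    + rewrite Rabs_left in Heq by lra.
      apply (taylor_cont_zero _ _ K xi d 1 Hd ltac:(ring) (HK xi)).
      intros h Hh. eapply fourier_vanish_open; eauto.
      rewrite Rabs_left; lra.
Qed.

Lemma telescope_aux (F : R -> C) K d (N : nat) : 0 < d -> (1 <= INR N) -> d / INR N <= 1 ->
  (forall u h, 0 <= u <= d -> 0 <= h <= 1 -> Cmod (F (u + h)%R - F u)%C <= K * h^2) ->
  forall k : nat, (k <= N)%nat -> Cmod (F (INR k * (d / INR N))%R - F 0)%C <= INR k * K * (d / INR N)^2.
Proof.
  intros Hd HN Hh H. induction k as [|k IH]; intros Hk.
  - simpl. rewrite Rmult_0_l. replace (F 0 - F 0)%C with (RtoC 0) by ring. rewrite Cmod_0. lra.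
  - assert (Hk' : (k <= N)%nat) by lia. specialize (IH Hk').
    assert (HkN : INR k + 1 <= INR N) by (rewrite <- S_INR; apply le_INR; lia).
    assert (Hpos : 0 < d / INR N) by (apply Rdiv_lt_0_compat; lra).
    assert (Hk0 : 0 <= INR k) by apply pos_INR.
    assert (Hu : 0 <= INR k * (d / INR N) <= d).
    { split. nra. apply Rle_trans with (INR N * (d / INR N)).
      - apply Rmult_le_compat_r; lra.
      - right. field. lra. }
    specialize (H (INR k * (d / INR N)) (d / INR N) Hu ltac:(lra)).
    rewrite S_INR. replace ((INR k + 1) * (d / INR N)) with (INR k * (d / INR N) + d / INR N) by ring.
    replace (F (INR k * (d / INR N) + d / INR N)%R - F 0)%C with
      ((F (INR k * (d / INR N) + d / INR N)%R - F (INR k * (d / INR N))%R) +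
       (F (INR k * (d / INR N))%R - F 0))%C by ring.
    eapply Rle_trans. apply Cmod_triangle. nra.
Qed.

Lemma telescope (F : R -> C) K d : 0 < d ->
  (forall u h, 0 <= u <= d -> 0 <= h <= 1 -> Cmod (F (u + h)%R - F u)%C <= K * h^2) ->
  F d = F 0.
Proof.
  intros Hd H.
  destruct (Req_dec (Cmod (F d - F 0)%C) 0) as [E0|E0].
  - apply Cmod_eq_0 in E0. replace (F d) with ((F d - F 0) + F 0)%C by ring. rewrite E0. ring.
  - exfalso. assert (Hdl : 0 < Cmod (F d - F 0)%C) by (generalize (Cmod_ge_0 (F d - F 0)%C); lra).
    set (dl := Cmod (F d - F 0)%C) in *.
    destruct (INR_unbounded (Rmax 1 (Rmax d (Rabs K * d^2 / dl)))) as [N HN].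
    assert (HN1 : 1 <= INR N) by (generalize (Rmax_l 1 (Rmax d (Rabs K * d^2 / dl))); lra).
    assert (HN2 : d <= INR N).
    { generalize (Rmax_r 1 (Rmax d (Rabs K * d^2 / dl))) (Rmax_l d (Rabs K * d^2 / dl)). lra. }
    assert (HN3 : Rabs K * d^2 / dl < INR N).
    { generalize (Rmax_r 1 (Rmax d (Rabs K * d^2 / dl))) (Rmax_r d (Rabs K * d^2 / dl)). lra. }
    assert (Hh : d / INR N <= 1).
    { apply Rmult_le_reg_r with (INR N). lra. unfold Rdiv. rewrite Rmult_assoc, Rinv_l by lra. lra. }
    assert (T := telescope_aux F K d N Hd HN1 Hh H N (Nat.le_refl N)).
    replace (INR N * (d / INR N)) with d in T by (field; lra).
    fold dl in T.
    assert (INR N * K * (d / INR N) ^ 2 = K * d^2 / INR N) by (field; lra).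
    rewrite H0 in T.
    assert (K * d^2 / INR N <= Rabs K * d^2 / INR N).
    { unfold Rdiv. apply Rmult_le_compat_r. left; apply Rinv_0_lt_compat; lra.
      apply Rmult_le_compat_r. nra. apply RRle_abs. }
    assert (Rabs K * d^2 < dl * INR N).
    { apply Rmult_lt_reg_r with (/ dl). apply Rinv_0_lt_compat; lra.
      replace (dl * INR N * / dl) with (INR N) by (field; lra). exact HN3. }
    assert (Rabs K * d^2 / INR N < dl).
    { apply Rmult_lt_reg_r with (INR N). lra. replace (Rabs K * d ^ 2 / INR N * INR N) with (Rabs K * d^2) by (field; lra). lra. }
    lra.
Qed.

Lemma amgm (p q t : R) : 0 <= p -> 0 < q -> 0 < t -> p / q <= (p^2 / t + t / q^2) / 2.
Proof.
  intros Hp Hq Ht.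
  assert (H : 2 * p * q * t <= p^2 * q^2 + t^2) by (assert (0 <= (p * q - t)^2) by apply pow2_ge_0; nra).
  apply Rmult_le_reg_r with (2 * t * q^2). assert (0 < q^2) by nra. nra.
  replace (p / q * (2 * t * q ^ 2)) with (2 * p * q * t) by (field; lra).
  replace ((p ^ 2 / t + t / q ^ 2) / 2 * (2 * t * q ^ 2)) with (p^2 * q^2 + t^2) by (field; lra).
  exact H.
Qed.

Definition wpt (x sg y : R) : C := (x, sg * y).

Definition Gf psi x sg y u s : C :=
  (psi s * E (2 * PI * y) (2 * PI * sg * (x - s)) u * / (RtoC s - wpt x sg y))%C.

Definition Df psi x sg y u s : C :=
  (psi s * (Cmk (- (2 * PI * y)) (2 * PI * sg * (x - s)) * E (2 * PI * y) (2 * PI * sg * (x - s)) u)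
    * / (RtoC s - wpt x sg y))%C.

Lemma Cmod_sw x sg y s : sg * sg = 1 -> Cmod (RtoC s - wpt x sg y)%C = sqrt ((s - x)^2 + y^2).
Proof.
  intros Hs. unfold Cmod, wpt, RtoC, Cminus, Cplus, Copp. simpl. f_equal.
  replace ((0 + - (sg * y)) * ((0 + - (sg * y)) * 1)) with ((sg * sg) * (y * (y * 1))) by ring. rewrite Hs. ring.
Qed.

Lemma Cmod_sw_ge x sg y s : sg * sg = 1 -> 0 < y -> y <= Cmod (RtoC s - wpt x sg y)%C.
Proof.
  intros Hs Hy. rewrite Cmod_sw by auto.
  rewrite <- (sqrt_pow2 y) at 1 by lra. apply sqrt_le_1_alt. generalize (pow2_ge_0 (s - x)). lra.
Qed.

Lemma sw_nz x sg y s : sg * sg = 1 -> 0 < y -> (RtoC s - wpt x sg y)%C <> 0%C.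
Proof.
  intros Hs Hy H. assert (Hc := Cmod_sw_ge x sg y s Hs Hy). rewrite H, Cmod_0 in Hc. lra.
Qed.

Lemma Cmod_sw_le x sg y s : sg * sg = 1 -> 0 < y -> Cmod (RtoC s - wpt x sg y)%C <= Rabs s + Rabs x + y.
Proof.
  intros Hs Hy. rewrite Cmod_sw by auto.
  rewrite <- (sqrt_pow2 (Rabs s + Rabs x + y)) by (generalize (Rabs_pos s) (Rabs_pos x); lra).
  apply sqrt_le_1_alt.
  assert (Rabs (s - x) <= Rabs s + Rabs x).
  { unfold Rminus. eapply Rle_trans. apply Rabs_triang. rewrite Rabs_Ropp. lra. }
  assert ((s - x)^2 = Rabs (s - x) ^ 2) by (rewrite RPow_abs; rewrite Rabs_right; [reflexivity| apply Rle_ge, pow2_ge_0]).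
  generalize (Rabs_pos (s - x)). nra.
Qed.

Lemma ccont_inv_sw x sg y : sg * sg = 1 -> 0 < y -> ccont (fun s => / (RtoC s - wpt x sg y))%C.
Proof.
  intros Hs Hy. apply ccont_inv.
  - apply ccont_minus. apply ccont_real. intros s; apply cont_of_ex; auto_derive; auto. apply ccont_const.
  - intros s; apply sw_nz; auto.
Qed.

Lemma ccont_E_s a k c u : ccont (fun s => E a (k * (c - s)) u).
Proof. apply ccont_pair; intros s; apply cont_of_ex; auto_derive; auto. Qed.

Lemma Gf_cont psi x sg y u : sg * sg = 1 -> 0 < y -> ccont psi -> ccont (Gf psi x sg y u).
Proof.
  intros Hs Hy Hc. unfold Gf. apply ccont_mult. apply ccont_mult; auto.
  apply ccont_E_s. apply ccont_inv_sw; auto.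
Qed.

Lemma Df_cont psi x sg y u : sg * sg = 1 -> 0 < y -> ccont psi -> ccont (Df psi x sg y u).
Proof.
  intros Hs Hy Hc. unfold Df. apply ccont_mult. apply ccont_mult; auto.
  apply ccont_mult. apply ccont_pair; intros s; apply cont_of_ex; auto_derive; auto.
  apply ccont_E_s. apply ccont_inv_sw; auto.
Qed.

Lemma Cmod_inv_sw x sg y s : sg * sg = 1 -> 0 < y -> Cmod (/ (RtoC s - wpt x sg y))%C <= / y.
Proof.
  intros Hs Hy. rewrite Cmod_inv by (apply sw_nz; auto).
  apply Rinv_le_contravar; auto. apply Cmod_sw_ge; auto.
Qed.

Lemma Gf_dom psi x sg y u M0 : sg * sg = 1 -> 0 < y -> dom psi M0 ->
  dom (Gf psi x sg y u) (M0 * exp (- (2 * PI * y) * u) / y).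
Proof.
  intros Hs Hy Hd s. unfold Gf. rewrite !Cmod_mult, Cmod_E.
  assert (H1 := Cmod_inv_sw x sg y s Hs Hy).
  assert (H2 := Hd s). assert (H3 := Cmod_ge_0 (psi s)).
  assert (H4 := exp_pos (- (2 * PI * y) * u)).
  assert (H5 := Cmod_ge_0 (/ (RtoC s - wpt x sg y))%C).
  apply Rle_trans with (Cmod (psi s) * (1 + s^2) * exp (- (2 * PI * y) * u) * / y).
  - replace (Cmod (psi s) * exp (- (2 * PI * y) * u) * Cmod (/ (RtoC s - wpt x sg y))%C * (1 + s ^ 2))
      with (Cmod (psi s) * (1 + s^2) * exp (- (2 * PI * y) * u) * Cmod (/ (RtoC s - wpt x sg y))%C) by ring.
    apply Rmult_le_compat_l; [|exact H1]. apply Rmult_le_pos; [apply Rmult_le_pos|]; try lra. generalize (pow2_ge_0 s); lra.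
  - unfold Rdiv. apply Rmult_le_compat_r. left; apply Rinv_0_lt_compat; auto.
    apply Rmult_le_compat_r; lra.
Qed.

Lemma cexpi_add a b : (cexpi a * cexpi b)%C = cexpi (a + b).
Proof.
  unfold cexpi, Cmult. simpl. rewrite cos_plus, sin_plus. f_equal; ring.
Qed.

Lemma E_cexpi a th u : E a th u = (RtoC (exp (- a * u)) * cexpi (th * u))%C.
Proof. unfold E, cexpi, RtoC, Cmult. simpl. f_equal; ring. Qed.

Lemma Cmk_sw x sg y s : sg * sg = 1 ->
  Cmk (- (2 * PI * y)) (2 * PI * sg * (x - s)) = (Cmk 0 (- (2 * PI * sg)) * (RtoC s - wpt x sg y))%C.
Proof.
  intros Hs. unfold Cmk, wpt, RtoC, Cmult, Cminus, Cplus, Copp. simpl.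
  f_equal.
  - replace (2 * PI * y) with (2 * PI * (sg * sg) * y) at 1 by (rewrite Hs; ring). ring.
  - ring.
Qed.

Lemma Df_eq psi x sg y u s : sg * sg = 1 -> 0 < y ->
  Df psi x sg y u s =
  ((Cmk 0 (- (2 * PI * sg)) * RtoC (exp (- (2 * PI * y) * u)) * cexpi (2 * PI * sg * x * u))
    * (psi s * cexpi (- (2 * PI * s * (sg * u)))))%C.
Proof.
  intros Hs Hy. unfold Df. rewrite Cmk_sw by auto. rewrite E_cexpi.
  assert (Hc : cexpi (2 * PI * sg * (x - s) * u) = (cexpi (2 * PI * sg * x * u) * cexpi (- (2 * PI * s * (sg * u))))%C).
  { rewrite cexpi_add. f_equal. ring. }
  rewrite Hc. field. apply sw_nz; auto.
Qed.

Lemma int_Df_zero psi x sg y u d M0 : sg * sg = 1 -> 0 < y -> rapid psi -> dom psi M0 ->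
  (forall xi, Rabs xi <= d -> fourier psi xi = 0%C) -> Rabs u <= d ->
  int_R (Df psi x sg y u) = 0%C.
Proof.
  intros Hs Hy Hr Hd Hv Hu.
  rewrite (int_R_ext _ _ (fun s => Df_eq psi x sg y u s Hs Hy)).
  rewrite (int_R_cmul _ M0).
  - change (int_R (fun s => (psi s * cexpi (- (2 * PI * s * (sg * u))))%C)) with (fourier psi (sg * u)).
    rewrite Hv. ring.
    rewrite Rabs_mult. replace (Rabs sg) with 1. lra.
    assert (Rabs sg * Rabs sg = 1) by (rewrite <- Rabs_mult, Hs; apply Rabs_R1).
    generalize (Rabs_pos sg). nra.
  - apply ft_integrand_cont. apply Hr.
  - apply dom_unit; auto. intros; apply Cmod_cexpi.
Qed.

Definition cDf x sg y u : C :=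
  (Cmk 0 (- (2 * PI * sg)) * RtoC (exp (- (2 * PI * y) * u)) * cexpi (2 * PI * sg * x * u))%C.

Lemma Df_dom psi x sg y u M0 : sg * sg = 1 -> 0 < y -> dom psi M0 ->
  dom (Df psi x sg y u) (Cmod (cDf x sg y u) * M0).
Proof.
  intros Hs Hy Hd.
  replace (Df psi x sg y u) with (fun s => (cDf x sg y u * (psi s * cexpi (- (2 * PI * s * (sg * u)))))%C).
  - apply dom_cmul. apply dom_unit; auto. intros; apply Cmod_cexpi.
  - apply functional_extensionality. intros s. rewrite Df_eq; auto.
Qed.

Lemma sq_Cmod_sw x sg y s : sg * sg = 1 ->
  (2 * PI * y) ^ 2 + (2 * PI * sg * (x - s)) ^ 2 = 4 * PI^2 * (Cmod (RtoC s - wpt x sg y)%C)^2.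
Proof.
  intros Hs. rewrite Cmod_sw by auto. rewrite pow2_sqrt by (generalize (pow2_ge_0 (s-x)) (pow2_ge_0 y); lra).
  replace ((2 * PI * sg * (x - s)) ^ 2) with (4 * PI^2 * (sg * sg) * (x - s)^2) by ring.
  rewrite Hs. ring.
Qed.

Lemma A_taylor psi x sg y M0 M1 : sg * sg = 1 -> 0 < y -> ccont psi -> dom psi M0 ->
  dom (fun s => (RtoC s * psi s)%C) M1 ->
  forall u h, 0 <= u -> Rabs h <= 1 ->
  Cmod (int_R (Gf psi x sg y (u + h)) - int_R (Gf psi x sg y u) - RtoC h * int_R (Df psi x sg y u))%C
  <= PI * (8 * PI^2 * exp (2 * PI * y) * (M1 + (Rabs x + y) * M0)) * h^2.
Proof.
  intros Hs Hy Hc H0 H1 u h Hu Hh.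
  rewrite (int_R_lin3 _ _ _ _ _ _ _ (Gf_cont psi x sg y (u + h) Hs Hy Hc) (Gf_dom psi x sg y (u + h) M0 Hs Hy H0)
     (Gf_cont psi x sg y u Hs Hy Hc) (Gf_dom psi x sg y u M0 Hs Hy H0)
     (Df_cont psi x sg y u Hs Hy Hc) (Df_dom psi x sg y u M0 Hs Hy H0)).
  replace (PI * (8 * PI ^ 2 * exp (2 * PI * y) * (M1 + (Rabs x + y) * M0)) * h ^ 2) with
    (PI * (8 * PI ^ 2 * exp (2 * PI * y) * h^2 * (M1 + (Rabs x + y) * M0))) by ring.
  apply int_R_dom_bound.
  - apply ccont_minus. apply ccont_minus. apply Gf_cont; auto. apply Gf_cont; auto.
    apply ccont_mult. apply ccont_const. apply Df_cont; auto.
  - intros s.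
    set (a := 2 * PI * y). set (th := 2 * PI * sg * (x - s)).
    set (ws := (RtoC s - wpt x sg y)%C).
    replace (Gf psi x sg y (u + h) s - Gf psi x sg y u s - RtoC h * Df psi x sg y u s)%C with
      (psi s * (E a th (u + h) - E a th u - RtoC h * (Cmk (- a) th * E a th u)) * / ws)%C
      by (unfold Gf, Df; fold a th ws; ring).
    rewrite !Cmod_mult. rewrite Cmod_inv by (apply sw_nz; auto).
    assert (HT := E_taylor a th u h Hh).
    assert (Hq : y <= Cmod ws) by (apply Cmod_sw_ge; auto).
    assert (Hq2 : Cmod ws <= Rabs s + Rabs x + y) by (apply Cmod_sw_le; auto).
    assert (Hsq : a^2 + th^2 = 4 * PI^2 * Cmod ws ^ 2) by (apply sq_Cmod_sw; auto).
    assert (Ha : 0 < a) by (unfold a; generalize PI_RGT_0; nra).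
    assert (He1 : exp (- a * u) <= 1) by (rewrite <- exp_0; apply exp_mono; nra).
    rewrite Rabs_right in HT by lra.
    assert (HP := Cmod_ge_0 (psi s)).
    assert (Hea := exp_pos a). assert (Heu := exp_pos (- a * u)).
    assert (HEr := Cmod_ge_0 (E a th (u + h) - E a th u - RtoC h * (Cmk (- a) th * E a th u))%C).
    assert (Hh2 : 0 <= h^2) by apply pow2_ge_0.
    assert (HPi := PI_RGT_0).
    assert (HR : Cmod (E a th (u + h) - E a th u - RtoC h * (Cmk (- a) th * E a th u))%C * / Cmod ws
                 <= 8 * PI^2 * exp a * h^2 * Cmod ws).
    { apply Rmult_le_reg_r with (Cmod ws). lra.
      rewrite Rmult_assoc, Rinv_l, Rmult_1_r by lra.
      eapply Rle_trans. exact HT. rewrite Hsq.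
      replace (2 * (4 * PI ^ 2 * Cmod ws ^ 2 * (exp (- a * u) * exp a)) * h ^ 2) with
        ((8 * PI^2 * exp a * h^2 * Cmod ws * Cmod ws) * exp (- a * u)) by ring.
      replace (8 * PI ^ 2 * exp a * h ^ 2 * Cmod ws * Cmod ws) with
        ((8 * PI^2 * exp a * h^2 * Cmod ws * Cmod ws) * 1) at 2 by ring.
      apply Rmult_le_compat_l; auto.
      pos. }
    assert (H0s := H0 s). assert (H1s := H1 s). cbv beta in H1s. rewrite Cmod_mult, Cmod_R in H1s.
    assert (Hss : 0 <= 1 + s^2) by (generalize (pow2_ge_0 s); lra).
    apply Rle_trans with (Cmod (psi s) * (8 * PI^2 * exp a * h^2 * (Rabs s + Rabs x + y)) * (1 + s^2)).
    + replace (Cmod (psi s) * Cmod (E a th (u + h) - E a th u - RtoC h * (Cmk (- a) th * E a th u))%C * / Cmod ws * (1 + s ^ 2))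
        with (Cmod (psi s) * (Cmod (E a th (u + h) - E a th u - RtoC h * (Cmk (- a) th * E a th u))%C * / Cmod ws) * (1 + s ^ 2)) by ring.
      apply Rmult_le_compat_r; [lra|]. apply Rmult_le_compat_l; auto.
      eapply Rle_trans; [exact HR|]. apply Rmult_le_compat_l; [pos|exact Hq2].
    + replace (Cmod (psi s) * (8 * PI ^ 2 * exp a * h ^ 2 * (Rabs s + Rabs x + y)) * (1 + s ^ 2)) with
        ((8 * PI ^ 2 * exp a * h ^ 2) * (Rabs s * Cmod (psi s) * (1 + s^2) + (Rabs x + y) * (Cmod (psi s) * (1 + s^2)))) by ring.
      apply Rmult_le_compat_l. pos.
      assert (0 <= Rabs x + y) by (generalize (Rabs_pos x); lra).
      assert ((Rabs x + y) * (Cmod (psi s) * (1 + s ^ 2)) <= (Rabs x + y) * M0) by (apply Rmult_le_compat_l; auto).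
      lra.
Qed.

Lemma is_RInt_cauchy_bound (e Mq x y : R) a b : 0 < y -> a <= b ->
  is_RInt (fun s => e / 2 * (Mq / (1 + s^2) / sqrt y + sqrt y / ((s - x)^2 + y^2))) a b
    (e / 2 * (Mq * (atan b - atan a) / sqrt y + (atan ((b - x) / y) - atan ((a - x) / y)) / sqrt y)).
Proof.
  intros Hy Hab.
  set (t := sqrt y). assert (Ht : 0 < t) by (apply sqrt_lt_R0; auto).
  assert (Htt : t * t = y) by (apply sqrt_sqrt; lra).
  set (G := fun s => e / 2 * (Mq * atan s / t + atan ((s - x) / y) / t)).
  replace (e / 2 * (Mq * (atan b - atan a) / t + (atan ((b - x) / y) - atan ((a - x) / y)) / t))
    with (minus (G b) (G a)) by (unfold G, minus, plus, opp; simpl; field; lra).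
  apply (is_RInt_derive (V:=R_CompleteNormedModule) G).
  - intros s Hs. unfold G. auto_derive; auto. rewrite <- Htt. field.
    assert (0 < (t * t)^2) by (apply pow_lt; nra).
    generalize (pow2_ge_0 (s - x)) (pow2_ge_0 s). intros.
    repeat split; intro; nra.
  - intros s Hs. apply cont_of_ex. auto_derive. assert (0 < y * (y * 1)) by nra. generalize (pow2_ge_0 (s - x)) (pow2_ge_0 s). simpl. intros. repeat split; auto; intro; nra.
Qed.

Lemma RInt_Gf_bound psi x sg y d Mq a b : sg * sg = 1 -> 0 < y -> 0 <= Mq -> ccont psi ->
  (forall s, Cmod (psi s) ^ 2 * (1 + s^2) <= Mq) -> a <= b ->
  Cmod (RInt (V:=CV) (Gf psi x sg y d) a b) <= exp (- (2 * PI * y) * d) * ((Mq + 1) * PI) / (2 * sqrt y).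
Proof.
  intros Hs Hy HMq Hc HMq' Hab.
  set (e := exp (- (2 * PI * y) * d)). assert (He : 0 < e) by apply exp_pos.
  set (t := sqrt y). assert (Ht : 0 < t) by (apply sqrt_lt_R0; auto).
  assert (Htt : t * t = y) by (apply sqrt_sqrt; lra).
  apply Rle_trans with (e / 2 * (Mq * (atan b - atan a) / t + (atan ((b - x) / y) - atan ((a - x) / y)) / t)).
  - rewrite Cmod_norm.
    apply (norm_RInt_le (V:=CV) (Gf psi x sg y d) (fun s => e / 2 * (Mq / (1 + s^2) / t + t / ((s - x)^2 + y^2))) a b).
    + auto.
    + intros s Hs'. rewrite <- Cmod_norm. unfold Gf. rewrite !Cmod_mult, Cmod_E.
      rewrite Cmod_inv by (apply sw_nz; auto). fold e.
      set (Q := Cmod (RtoC s - wpt x sg y)%C).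
      assert (HQ : y <= Q) by (apply Cmod_sw_ge; auto).
      assert (HQ2 : Q^2 = (s - x)^2 + y^2).
      { unfold Q. rewrite Cmod_sw by auto. rewrite pow2_sqrt; auto. generalize (pow2_ge_0 (s - x)) (pow2_ge_0 y). lra. }
      assert (Hp := Cmod_ge_0 (psi s)).
      assert (Ham := amgm (Cmod (psi s)) Q t Hp ltac:(lra) Ht).
      assert (Hpsi : Cmod (psi s) ^ 2 <= Mq / (1 + s^2)).
      { assert (0 < 1 + s^2) by (generalize (pow2_ge_0 s); lra).
        apply Rmult_le_reg_r with (1 + s^2); auto. unfold Rdiv. rewrite Rmult_assoc, Rinv_l by lra.
        rewrite Rmult_1_r. apply HMq'. }
      replace (Cmod (psi s) * e * / Q) with (e * (Cmod (psi s) / Q)) by (unfold Rdiv; ring).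
      replace (e / 2 * (Mq / (1 + s ^ 2) / t + t / ((s - x) ^ 2 + y ^ 2))) with
        (e * ((Mq / (1 + s ^ 2) / t + t / Q ^ 2) / 2)) by (rewrite HQ2; field; repeat split; try lra; try nra).
      apply Rmult_le_compat_l; [lra|]. eapply Rle_trans; [exact Ham|].
      apply Rmult_le_compat_r; [lra|]. apply Rplus_le_compat_r.
      unfold Rdiv. apply Rmult_le_compat_r. left; apply Rinv_0_lt_compat; auto. exact Hpsi.
    + apply RInt_correct. apply ex_RInt_C. apply Gf_cont; auto.
    + apply is_RInt_cauchy_bound; auto.
  - generalize (atan_bound a) (atan_bound b) (atan_bound ((b - x) / y)) (atan_bound ((a - x) / y)). intros.
    replace (e * ((Mq + 1) * PI) / (2 * t)) with (e / 2 * (Mq * PI / t + PI / t)) by (field; lra).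
    apply Rmult_le_compat_l. lra.
    apply Rplus_le_compat; unfold Rdiv; apply Rmult_le_compat_r; try (left; apply Rinv_0_lt_compat; auto); nra.
Qed.

Lemma Gf_zero psi x sg y s : Gf psi x sg y 0 s = (psi s * / (RtoC s - wpt x sg y))%C.
Proof.
  unfold Gf. replace (E (2 * PI * y) (2 * PI * sg * (x - s)) 0) with (RtoC 1).
  - ring.
  - unfold E, RtoC. rewrite !Rmult_0_r, exp_0, cos_0, sin_0. f_equal; ring.
Qed.

Lemma half_plane psi d x sg y Mq : sg * sg = 1 -> 0 < y -> 0 < d -> rapid psi ->
  (forall xi, Rabs xi <= d -> fourier psi xi = 0%C) ->
  0 <= Mq -> (forall s, Cmod (psi s) ^ 2 * (1 + s^2) <= Mq) ->
  Cmod (int_R (fun s => psi s * / (RtoC s - wpt x sg y))%C)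
    <= exp (- (2 * PI * d * y)) * ((Mq + 1) * PI) / (2 * sqrt y).
Proof.
  intros Hs Hy Hd Hr Hv HMq HMq'.
  assert (Hc := proj1 Hr).
  destruct (rapid_dom0 psi Hr) as [M0 H0].
  destruct (rapid_dom0 _ (rapid_pow psi 1 Hr)) as [M1 H1].
  assert (H1' : dom (fun s => (RtoC s * psi s)%C) M1).
  { intros s. specialize (H1 s). replace (RtoC s) with (RtoC (s^1)) by (f_equal; ring). exact H1. }
  assert (Htel : int_R (Gf psi x sg y d) = int_R (Gf psi x sg y 0)).
  { apply (telescope (fun u => int_R (Gf psi x sg y u))
      (PI * (8 * PI^2 * exp (2 * PI * y) * (M1 + (Rabs x + y) * M0))) d Hd).
    intros u h Hu Hh.
    assert (HT := A_taylor psi x sg y M0 M1 Hs Hy Hc H0 H1' u h ltac:(lra) ltac:(rewrite Rabs_right; lra)).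
    rewrite (int_Df_zero psi x sg y u d M0 Hs Hy Hr H0 Hv) in HT by (rewrite Rabs_right; lra).
    replace (int_R (Gf psi x sg y (u + h)) - int_R (Gf psi x sg y u) - RtoC h * RtoC 0)%C with
      (int_R (Gf psi x sg y (u + h)) - int_R (Gf psi x sg y u))%C in HT by ring.
    exact HT. }
  rewrite <- (int_R_ext _ _ (Gf_zero psi x sg y)).
  rewrite <- Htel.
  replace (- (2 * PI * d * y)) with (- (2 * PI * y) * d) by ring.
  apply int_R_bound with (M0 * exp (- (2 * PI * y) * d) / y).
  - apply Gf_cont; auto.
  - apply Gf_dom; auto.
  - intros a b Hab. apply RInt_Gf_bound; auto.
Qed.

Lemma ccont_comp_lin (g : R -> C) x : ccont g -> ccont (fun t => g (x - t)).
Proof.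
  intros Hc s. apply continuous_comp with (f := fun t => x - t) (g := g).
  - apply cont_of_ex. auto_derive. auto.
  - apply Hc.
Qed.

Lemma RInt_reflect (g : R -> C) x a b : ccont g ->
  RInt (V:=CV) (fun t => g (x - t)) a b = RInt (V:=CV) g (x - b) (x - a).
Proof.
  intros Hc. apply is_RInt_unique.
  rewrite <- (opp_RInt_swap (V:=CV)) by (apply ex_RInt_C; auto).
  assert (H := is_RInt_opp (V:=CV) g (x - a) (x - b) _ (RInt_correct (V:=CV) g (x - a) (x - b) (ex_RInt_C g _ _ Hc))).
  replace (x - a) with (-1 * a + x) in H by ring. replace (x - b) with (-1 * b + x) in H by ring.
  apply (is_RInt_comp_lin (V:=CV) (fun s => opp (g s))) in H.
  replace (-1 * a + x) with (x - a) in H by ring. replace (-1 * b + x) with (x - b) in H by ring.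
  eapply (is_RInt_ext (V:=CV)); [|exact H].
  intros t _. cbv beta. rewrite (CV_scal (-1)). simplC. replace (-1 * t + x) with (x - t) by ring.
  destruct (g (x - t)) as [p q]. unfold RtoC, Cmult, Copp. simpl. f_equal; ring.
Qed.

Lemma int_R_reflect (g : R -> C) x M : ccont g -> dom g M ->
  int_R (fun t => g (x - t)) = int_R g.
Proof.
  intros Hc Hd. apply int_R_eq_approx.
  - intros a b. apply ex_RInt_C. apply ccont_comp_lin; auto.
  - intros eps Heps.
    destruct (int_R_approx g (fun a b => ex_RInt_C g a b Hc) (ex_int_dom g M Hc Hd) eps Heps) as [N HN].
    exists (Rabs N + Rabs x). intros a b Ha Hb. rewrite RInt_reflect by auto.
    generalize (RRle_abs x) (RRle_abs (-x)) (RRle_abs N) (RRle_abs (- N)). rewrite !Rabs_Ropp. intros.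
    apply HN; lra.
Qed.

Lemma schwartz_rapid phi : is_schwartz phi -> rapid phi.
Proof.
  intros [D [HD0 [HD1 HD2]]]. split.
  - intros s. rewrite <- HD0.
    apply (ex_derive_continuous (K:=R_AbsRing) (V:=C_R_NormedModule)).
    exists (D 1%nat s). apply HD1.
  - intros m. destruct (HD2 0%nat m) as [M HM]. exists M. intros s.
    rewrite <- HD0. rewrite RPow_abs. rewrite Rmult_comm. apply HM.
Qed.

Lemma fourier_zero_open phi d : dist_to_0 (support (fourier phi)) d ->
  forall xi, Rabs xi < d -> fourier phi xi = 0%C.
Proof.
  intros [H1 _] xi Hxi. destruct (Ceq_dec (fourier phi xi) 0) as [E|E]; auto.
  exfalso. assert (support (fourier phi) xi).
  { intros e He. exists xi. split; auto. rewrite Rminus_diag, Rabs_R0. auto. }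
  specialize (H1 xi H). lra.
Qed.

Definition Fw (psi : R -> C) (w : C) : C := int_R (fun s => psi s * / (RtoC s - w))%C.

Lemma poisson_split x y s : 0 < y ->
  RtoC (poisson y (x - s)) =
  (/ Cmk 0 (2 * PI) * (/ (RtoC s - wpt x 1 y) - / (RtoC s - wpt x (-1) y)))%C.
Proof.
  intros Hy. assert (HPi := PI_RGT_0).
  assert (Hq : 0 < (s - x)^2 + y^2) by (generalize (pow2_ge_0 (s - x)); nra).
  unfold poisson, Cmk, wpt, RtoC, Cinv, Cmult, Cminus, Cplus, Copp. simpl.
  f_equal; field; repeat split; try nra.
Qed.

Lemma dom_div_sw psi M x sg y : sg * sg = 1 -> 0 < y -> dom psi M ->
  dom (fun s => psi s * / (RtoC s - wpt x sg y))%C (M / y).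
Proof.
  intros Hs Hy Hd s. rewrite Cmod_mult.
  assert (H1 := Cmod_inv_sw x sg y s Hs Hy). assert (H2 := Hd s).
  assert (0 <= Cmod (psi s)) by apply Cmod_ge_0. assert (0 <= s^2) by apply pow2_ge_0.
  assert (0 <= Cmod (/ (RtoC s - wpt x sg y))%C) by apply Cmod_ge_0.
  apply Rle_trans with (Cmod (psi s) * (1 + s^2) * / y).
  - replace (Cmod (psi s) * Cmod (/ (RtoC s - wpt x sg y))%C * (1 + s ^ 2)) with
      (Cmod (psi s) * (1 + s^2) * Cmod (/ (RtoC s - wpt x sg y))%C) by ring.
    apply Rmult_le_compat_l; auto. nra.
  - unfold Rdiv. apply Rmult_le_compat_r; auto. left; apply Rinv_0_lt_compat; auto.
Qed.

Lemma ccont_div_sw psi x sg y : sg * sg = 1 -> 0 < y -> ccont psi ->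
  ccont (fun s => psi s * / (RtoC s - wpt x sg y))%C.
Proof. intros. apply ccont_mult; auto. apply ccont_inv_sw; auto. Qed.

Lemma poisson_le y t : 0 < y -> 0 <= poisson y t <= / (PI * y).
Proof.
  intros Hy. assert (HPi := PI_RGT_0). unfold poisson.
  assert (Hq : 0 < t^2 + y^2) by (generalize (pow2_ge_0 t); nra).
  split.
  - apply Rmult_le_pos. left; apply Rinv_0_lt_compat; auto. unfold Rdiv. apply Rmult_le_pos. lra. left; apply Rinv_0_lt_compat; auto.
  - rewrite Rinv_mult. apply Rmult_le_compat_l. left; apply Rinv_0_lt_compat; auto.
    apply Rmult_le_reg_r with (y * (t^2 + y^2)). nra.
    replace (y / (t ^ 2 + y ^ 2) * (y * (t ^ 2 + y ^ 2))) with (y * y) by (field; lra).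
    replace (/ y * (y * (t ^ 2 + y ^ 2))) with (t^2 + y^2) by (field; lra).
    generalize (pow2_ge_0 t). nra.
Qed.

Lemma conv_split phi y x M0 : ccont phi -> dom phi M0 -> 0 < y ->
  conv_poisson phi y x = (/ Cmk 0 (2 * PI) * (Fw phi (wpt x 1 y) - Fw phi (wpt x (-1) y)))%C.
Proof.
  intros Hc Hd Hy. assert (HPi := PI_RGT_0).
  set (g := fun s => (phi s * RtoC (poisson y (x - s)))%C).
  assert (Hgc : ccont g).
  { apply ccont_mult; auto. apply ccont_real. intros s. apply cont_of_ex. unfold poisson. auto_derive.
    intro H. generalize (pow2_ge_0 (x - s)). simpl in *. nra. }
  assert (Hgd : dom g (M0 * / (PI * y))).
  { intros s. unfold g. rewrite Cmod_mult, Cmod_R. rewrite (Rabs_right (poisson y (x - s))) by (apply Rle_ge, poisson_le; auto).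
    assert (H := poisson_le y (x - s) Hy). assert (H2 := Hd s).
    assert (0 <= Cmod (phi s)) by apply Cmod_ge_0. assert (0 <= s^2) by apply pow2_ge_0.
    apply Rle_trans with (Cmod (phi s) * (1 + s^2) * / (PI * y)).
    - replace (Cmod (phi s) * poisson y (x - s) * (1 + s ^ 2)) with (Cmod (phi s) * (1 + s ^ 2) * poisson y (x - s)) by ring.
      apply Rmult_le_compat_l; [nra | lra].
    - apply Rmult_le_compat_r; auto. left; apply Rinv_0_lt_compat; nra. }
  unfold conv_poisson. rewrite (int_R_ext _ (fun t => g (x - t))).
  2: { intros t. unfold g. do 3 f_equal. ring. }
  rewrite (int_R_reflect g x _ Hgc Hgd).
  assert (H1 := dom_div_sw phi M0 x 1 y ltac:(ring) Hy Hd).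
  assert (H2 := dom_div_sw phi M0 x (-1) y ltac:(ring) Hy Hd).
  assert (C1 := ccont_div_sw phi x 1 y ltac:(ring) Hy Hc).
  assert (C2 := ccont_div_sw phi x (-1) y ltac:(ring) Hy Hc).
  unfold Fw. rewrite <- (int_R_minus _ _ _ _ C1 H1 C2 H2).
  rewrite <- int_R_cmul with (M := M0 / y + M0 / y).
  - apply int_R_ext. intros s. unfold g. rewrite poisson_split by auto. ring.
  - apply ccont_minus; auto.
  - apply dom_minus; auto.
Qed.

Lemma cexpi_zero s : cexpi (- (2 * PI * s * 0)) = RtoC 1.
Proof. unfold cexpi, RtoC. replace (- (2 * PI * s * 0)) with 0 by ring. rewrite cos_0, sin_0. reflexivity. Qed.

Lemma int_R_as_fourier psi : int_R psi = fourier psi 0.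
Proof. unfold fourier. apply int_R_ext. intros s. rewrite cexpi_zero. ring. Qed.

Lemma power_step phi x sg y k : sg * sg = 1 -> 0 < y -> rapid phi ->
  (wpt x sg y * Fw (psi_j phi k) (wpt x sg y))%C =
  (Fw (psi_j phi (S k)) (wpt x sg y) - int_R (psi_j phi k))%C.
Proof.
  intros Hs Hy Hr.
  assert (Hk := rapid_pow phi k Hr). assert (Hk1 := rapid_pow phi (S k) Hr).
  destruct (rapid_dom0 _ Hk) as [M HM]. destruct (rapid_dom0 _ Hk1) as [M1 HM1].
  unfold Fw. rewrite <- (int_R_cmul _ (M / y)).
  - rewrite <- (int_R_minus _ _ (M1 / y) M).
    + apply int_R_ext. intros s. unfold psi_j. simpl. rewrite RtoC_mult. field. apply sw_nz; auto.
    + apply ccont_div_sw; auto. apply Hk1.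
    + apply dom_div_sw; auto.
    + apply Hk.
    + auto.
  - apply ccont_div_sw; auto. apply Hk.
  - apply dom_div_sw; auto.
Qed.

Lemma power_id phi d x sg y : sg * sg = 1 -> 0 < y -> rapid phi ->
  (forall j xi, Rabs xi <= d -> fourier (psi_j phi j) xi = 0%C) -> 0 < d ->
  forall k, (Cpow (wpt x sg y) k * Fw phi (wpt x sg y))%C = Fw (psi_j phi k) (wpt x sg y).
Proof.
  intros Hs Hy Hr Hv Hd. induction k as [|k IH].
  - simpl. unfold Fw, psi_j. rewrite Cmult_1_l. apply int_R_ext. intros s. simpl. ring.
  - rewrite Cpow_S. rewrite <- Cmult_assoc. rewrite IH. rewrite power_step by auto.
    rewrite int_R_as_fourier. rewrite Hv by (rewrite Rabs_R0; lra). ring.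
Qed.

Lemma finite_max (P : nat -> R -> Prop) n :
  (forall k M M', M <= M' -> P k M -> P k M') ->
  (forall k, exists M, 0 <= M /\ P k M) -> exists M, 0 <= M /\ forall k, (k <= n)%nat -> P k M.
Proof.
  intros Hmono H. induction n as [|n IH].
  - destruct (H 0%nat) as [M [HM HP]]. exists M. split; auto. intros k Hk.
    replace k with 0%nat by lia. auto.
  - destruct IH as [M [HM HP]]. destruct (H (S n)) as [M' [HM' HP']].
    exists (Rmax M M'). split. eapply Rle_trans; [exact HM| apply Rmax_l].
    intros k Hk. destruct (Nat.eq_dec k (S n)) as [->|Hne].
    + eapply Hmono; [apply Rmax_r | auto].
    + eapply Hmono; [apply Rmax_l | apply HP; lia].
Qed.

Lemma sum_n_Cmod_bound (f : nat -> C) (b : nat -> R) n G : 0 <= G ->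
  (forall k, (k <= n)%nat -> Cmod (f k) * G <= b k) -> Cmod (sum_n f n) * G <= sum_n b n.
Proof.
  intros HG. induction n as [|n IH]; intros H.
  - rewrite !sum_O. apply H. lia.
  - rewrite !sum_Sn. 
    change (plus (sum_n f n) (f (S n))) with (Cplus (sum_n f n) (f (S n))).
    change (plus (sum_n b n) (b (S n))) with (Rplus (sum_n b n) (b (S n))).
    assert (IH' := IH (fun k Hk => H k ltac:(lia))). assert (HS := H (S n) (Nat.le_refl _)).
    assert (T := Cmod_triangle (sum_n f n) (f (S n))).
    apply Rle_trans with ((Cmod (sum_n f n) + Cmod (f (S n))) * G).
    + apply Rmult_le_compat_r; auto.
    + lra.
Qed.

Lemma sum_n_mult_const (b : nat -> R) E n : sum_n (fun k => b k * E) n = sum_n b n * E.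
Proof.
  induction n as [|n IH].
  - rewrite !sum_O. reflexivity.
  - rewrite !sum_Sn. change (plus ?x ?y) with (Rplus x y). rewrite IH. symmetry. apply Rmult_plus_distr_r.
Qed.

Lemma sum_n_nonneg (b : nat -> R) n : (forall k, 0 <= b k) -> 0 <= sum_n b n.
Proof.
  intros H. induction n as [|n IH].
  - rewrite sum_O. auto.
  - rewrite sum_Sn. change (plus ?x ?y) with (Rplus x y). generalize (H (S n)). lra.
Qed.

Lemma Cmod_Cmk0 k : 0 < k -> Cmod (Cmk 0 k) = k.
Proof.
  intros Hk. unfold Cmk, Cmod. simpl. replace (0 * (0 * 1) + k * (k * 1)) with (k^2) by ring.
  apply sqrt_pow2. lra.
Qed.

Theorem lemma10 (phi : R -> C) (a : nat -> C) (n : nat) (d : R) :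
  is_schwartz phi ->
  dist_to_0 (support (fourier phi)) d ->
  0 < d ->
  a n <> 0%C ->
  exists K : R, 0 < K /\
    forall x y : R, 0 < y ->
      Cmod (Cmult (poly_eval a n x) (conv_poisson phi y x))
        <= K * (1 + y ^ n) * (exp (- (2 * PI * d * y)) / sqrt y).
Proof.
  intros Hsch Hdist Hd _.
  assert (Hr := schwartz_rapid phi Hsch). assert (Hc := proj1 Hr).
  assert (Hv := fourier_vanish phi d Hd Hr (fourier_zero_open phi d Hdist)).
  destruct (rapid_dom0 phi Hr) as [M0 H0].
  destruct (finite_max (fun k Mq => forall s, Cmod (psi_j phi k s) ^ 2 * (1 + s^2) <= Mq) n) as [Mq [HMq HMq']].
  { intros k M M' HMM' HP s. eapply Rle_trans; eauto. }
  { intros k. assert (Hk := rapid_pow phi k Hr).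
    destruct (proj2 Hk 0%nat) as [B HB]. destruct (rapid_dom0 _ Hk) as [M HM].
    assert (HB0 : 0 <= B) by (eapply Rle_trans; [|apply (HB 0)]; simpl; rewrite Rmult_1_r; apply Cmod_ge_0).
    assert (HM0 : 0 <= M) by (eapply dom_M_ge0; eauto).
    exists (B * M). split. nra.
    intros s. specialize (HB s). specialize (HM s). simpl in HB. rewrite Rmult_1_r in HB.
    assert (0 <= Cmod (psi_j phi k s)) by apply Cmod_ge_0.
    assert (0 <= s^2) by apply pow2_ge_0.
    replace (Cmod (psi_j phi k s) ^ 2 * (1 + s ^ 2)) with (Cmod (psi_j phi k s) * (Cmod (psi_j phi k s) * (1 + s^2))) by ring.
    apply Rmult_le_compat; auto. nra. }
  set (S := sum_n (fun k => Cmod (a k)) n).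
  assert (HS : 0 <= S) by (apply sum_n_nonneg; intros; apply Cmod_ge_0).
  exists (S * (Mq + 1) / 2 + 1). split. nra.
  intros x y Hy.
  assert (HPi := PI_RGT_0).
  set (e := exp (- (2 * PI * d * y))). assert (He : 0 < e) by apply exp_pos.
  assert (Hsq : 0 < sqrt y) by (apply sqrt_lt_R0; auto).
  set (Eb := e * ((Mq + 1) * PI) / (2 * sqrt y)).
  assert (HEb : 0 <= Eb) by (unfold Eb; apply Rmult_le_pos; [apply Rmult_le_pos; [lra | apply Rmult_le_pos; lra] | left; apply Rinv_0_lt_compat; lra]).
  assert (Hhalf : forall sg, sg * sg = 1 ->
            Cmod (poly_eval a n x) * Cmod (Fw phi (wpt x sg y)) <= S * Eb).
  { intros sg Hs. unfold S. rewrite <- sum_n_mult_const. unfold poly_eval.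
    apply sum_n_Cmod_bound. apply Cmod_ge_0.
    intros k Hk. rewrite Cmod_mult, Cmod_R.
    rewrite Rmult_assoc. apply Rmult_le_compat_l. apply Cmod_ge_0.
    apply Rle_trans with (Cmod (Cpow (wpt x sg y) k * Fw phi (wpt x sg y))%C).
    - rewrite Cmod_mult, Cmod_pow. apply Rmult_le_compat_r. apply Cmod_ge_0.
      rewrite <- RPow_abs. apply pow_incr. split. apply Rabs_pos.
      replace x with (Re (wpt x sg y)) at 1 by reflexivity. apply re_le_Cmod.
    - rewrite (power_id phi d x sg y Hs Hy Hr Hv Hd k). unfold Fw.
      apply half_plane; auto. apply rapid_pow; auto. }
  rewrite (conv_split phi y x M0 Hc H0 Hy).
  assert (Hnz : Cmk 0 (2 * PI) <> 0%C).
  { intros H. unfold Cmk in H. injection H. intros. lra. }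
  rewrite Cmod_mult, Cmod_mult, Cmod_inv by exact Hnz. rewrite Cmod_Cmk0 by lra.
  assert (T := Cmod_triangle (Fw phi (wpt x 1 y)) (- Fw phi (wpt x (-1) y))).
  rewrite Cmod_opp in T.
  assert (H1 := Hhalf 1 ltac:(ring)). assert (H2 := Hhalf (-1) ltac:(ring)).
  assert (HP0 := Cmod_ge_0 (poly_eval a n x)).
  apply Rle_trans with (Cmod (poly_eval a n x) * (/ (2 * PI) * (Cmod (Fw phi (wpt x 1 y)) + Cmod (Fw phi (wpt x (-1) y))))).
  - apply Rmult_le_compat_l; auto. apply Rmult_le_compat_l. left; apply Rinv_0_lt_compat; lra.
    exact T.
  - apply Rle_trans with (/ (2 * PI) * (2 * (S * Eb))).
    + replace (Cmod (poly_eval a n x) * (/ (2 * PI) * (Cmod (Fw phi (wpt x 1 y)) + Cmod (Fw phi (wpt x (-1) y)))))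
        with (/ (2 * PI) * (Cmod (poly_eval a n x) * Cmod (Fw phi (wpt x 1 y)) + Cmod (poly_eval a n x) * Cmod (Fw phi (wpt x (-1) y)))) by ring.
      apply Rmult_le_compat_l. left; apply Rinv_0_lt_compat; lra. lra.
    + unfold Eb. 
      replace (/ (2 * PI) * (2 * (S * (e * ((Mq + 1) * PI) / (2 * sqrt y))))) with
        ((S * (Mq + 1) / 2) * (e / sqrt y)) by (field; lra).
      assert (Hyn : 0 <= y ^ n) by (apply pow_le; lra).
      assert (0 <= e / sqrt y) by (unfold Rdiv; apply Rmult_le_pos; [lra | left; apply Rinv_0_lt_compat; lra]).
      assert (0 <= S * (Mq + 1) / 2) by nra.
      assert ((S * (Mq + 1) / 2) <= (S * (Mq + 1) / 2 + 1) * (1 + y ^ n)) by nra.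
      apply Rmult_le_compat_r; auto.
Qed.
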